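(* Let $L=(l_1,l_2,l_3)$ be positive integers with $l_1+l_2+l_3=n$ which are generic and reduced. Then $Tonn^{n,3}(L)$ is a triangulation of the 2-dimensional torus $T^2=(S^1)^2$.
   Context: $L=(l_1,\dots,l_k)$ is generic if for all subsets $I,J\subseteq[k]$, $\sum_{i\in I}l_i=\sum_{j\in J}l_j$ implies $I=J$. $L$ is reduced if $\gcd(l_1,\dots,l_k)=1$. The generalized tonnetz $Tonn^{n,k}(L)$ is the simplicial complex on vertex set $\mathbb{Z}_n$ whose maximal simplices are the sets $\Delta(x;\sigma)=\{x,\,x+l_{\sigma(1)},\dots,x+l_{\sigma(1)}+\dots+l_{\sigma(k-1)}\}$ (sums in $\mathbb{Z}_n$), for $x\in\mathbb{Z}_n$ and $\sigma\in S_k$; its simplices are all subsets of these sets. *)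

(* Defs.v *)
From Stdlib Require Import Reals List Arith.
Open Scope R_scope.

(* Index convention: L = (l 0, ..., l (k-1)) (paper: l_1..l_k). *)

Definition subset_sum (k : nat) (l : nat -> nat) (I : nat -> bool) : nat :=
  list_sum (map (fun i => if I i then l i else 0%nat) (seq 0 k)).

Definition generic (k : nat) (l : nat -> nat) : Prop :=
  forall I J : nat -> bool,
    subset_sum k l I = subset_sum k l J -> forall i, (i < k)%nat -> I i = J i.

Definition reduced (k : nat) (l : nat -> nat) : Prop :=
  fold_right Nat.gcd 0%nat (map l (seq 0 k)) = 1%nat.

Definition is_perm (k : nat) (sigma : nat -> nat) : Prop :=
  (forall i, (i < k)%nat -> (sigma i < k)%nat) /\
  (forall i j, (i < k)%nat -> (j < k)%nat -> sigma i = sigma j -> i = j).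

Definition psum (l : nat -> nat) (sigma : nat -> nat) (j : nat) : nat :=
  list_sum (map (fun i => l (sigma i)) (seq 0 j)).

(* v belongs to the maximal simplex Delta(x; sigma) of Tonn^{n,k}(L),
   vertices being the residues 0..n-1 of Z_n *)
Definition in_Delta (n k : nat) (l : nat -> nat) (x : nat) (sigma : nat -> nat)
  (v : nat) : Prop :=
  exists j, (j < k)%nat /\ v = ((x + psum l sigma j) mod n)%nat.

Definition sum_upto (n : nat) (f : nat -> R) : R :=
  fold_right Rplus 0 (map f (seq 0 n)).

(* Geometric realization |Tonn^{n,k}(L)| inside R^{Z_n} (functions nat -> R
   vanishing outside 0..n-1): the union of the closed geometric simplices
   spanned by the simplices of the complex, i.e. convex combinations of
   vertices of some maximal simplex Delta(x;sigma). *)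
Definition tonnetz_realization (n k : nat) (l : nat -> nat) (f : nat -> R) : Prop :=
  (forall v, 0 <= f v) /\
  (forall v, (n <= v)%nat -> f v = 0) /\
  sum_upto n f = 1 /\
  exists x sigma, (x < n)%nat /\ is_perm k sigma /\
    forall v, f v <> 0 -> in_Delta n k l x sigma v.

Definition distn (n : nat) (f g : nat -> R) : R :=
  fold_right Rmax 0 (map (fun v => Rabs (f v - g v)) (seq 0 n)).

Definition R4 : Type := (R * R * (R * R))%type.

Definition torus2 (p : R4) : Prop :=
  let '(a, b, (c, d)) := p in a * a + b * b = 1 /\ c * c + d * d = 1.

Definition dist4 (p q : R4) : R :=
  let '(a, b, (c, d)) := p in let '(a', b', (c', d')) := q in
  Rmax (Rmax (Rabs (a - a')) (Rabs (b - b'))) (Rmax (Rabs (c - c')) (Rabs (d - d'))).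

Definition cont_on {X Y : Type} (dX : X -> X -> R) (dY : Y -> Y -> R)
  (A : X -> Prop) (h : X -> Y) : Prop :=
  forall x, A x -> forall eps, 0 < eps -> exists delta, 0 < delta /\
    forall y, A y -> dX x y < delta -> dY (h x) (h y) < eps.

(* The complex with realization A (in R^{Z_n}) is a triangulation of T^2:
   its geometric realization is homeomorphic to (S^1)^2. *)
Definition triangulates_torus2 (n : nat) (A : (nat -> R) -> Prop) : Prop :=
  exists (h : (nat -> R) -> R4) (g : R4 -> (nat -> R)),
    (forall f, A f -> torus2 (h f)) /\
    (forall p, torus2 p -> A (g p)) /\
    (forall f, A f -> g (h f) = f) /\
    (forall p, torus2 p -> h (g p) = p) /\
    cont_on (distn n) dist4 A h /\
    cont_on dist4 (distn n) torus2 g.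

Definition L3 (l1 l2 l3 : nat) (i : nat) : nat :=
  match i with 0 => l1 | 1 => l2 | _ => l3 end.

(* Main.v *)
Require Import Defs.
From Stdlib Require Import Reals List Arith ZArith Lia Lra Znumtheory FunctionalExtensionality Classical.
Import ListNotations.
Open Scope R_scope.

Definition Rsum {A : Type} (l : list A) (F : A -> R) : R :=
  fold_right Rplus 0 (map F l).

Lemma Rsum_nil {A} (F : A -> R) : Rsum nil F = 0.
Proof. reflexivity. Qed.
Lemma Rsum_cons {A} (a : A) l F : Rsum (a :: l) F = F a + Rsum l F.
Proof. reflexivity. Qed.

Lemma Rsum_ext_in {A} (l : list A) F G :
  (forall x, In x l -> F x = G x) -> Rsum l F = Rsum l G.
Proof. intros H; unfold Rsum; f_equal; apply map_ext_in; auto. Qed.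

Lemma Rsum_plus {A} (l : list A) F G :
  Rsum l (fun x => F x + G x) = Rsum l F + Rsum l G.
Proof. induction l; rewrite ?Rsum_nil, ?Rsum_cons; [lra|]. rewrite IHl. lra. Qed.

Lemma Rsum_scal {A} (l : list A) c F :
  Rsum l (fun x => c * F x) = c * Rsum l F.
Proof. induction l; rewrite ?Rsum_nil, ?Rsum_cons; [lra|]. rewrite IHl. lra. Qed.

Lemma Rsum_zero {A} (l : list A) F :
  (forall x, In x l -> F x = 0) -> Rsum l F = 0.
Proof.
  induction l; intros H; rewrite ?Rsum_nil, ?Rsum_cons; [lra|].
  rewrite H by (left; auto). rewrite IHl; [lra|]. intros; apply H; right; auto.
Qed.

Lemma Rsum_nonneg {A} (l : list A) F :
  (forall x, In x l -> 0 <= F x) -> 0 <= Rsum l F.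
Proof.
  induction l; intros H; rewrite ?Rsum_nil, ?Rsum_cons; [lra|].
  assert (0 <= F a) by (apply H; left; auto).
  assert (0 <= Rsum l F) by (apply IHl; intros; apply H; right; auto). lra.
Qed.

Lemma Rsum_le {A} (l : list A) F G :
  (forall x, In x l -> F x <= G x) -> Rsum l F <= Rsum l G.
Proof.
  induction l; intros H; rewrite ?Rsum_nil, ?Rsum_cons; [lra|].
  assert (F a <= G a) by (apply H; left; auto).
  assert (Rsum l F <= Rsum l G) by (apply IHl; intros; apply H; right; auto). lra.
Qed.

Lemma Rsum_abs {A} (l : list A) F : Rabs (Rsum l F) <= Rsum l (fun x => Rabs (F x)).
Proof.
  induction l; rewrite ?Rsum_nil, ?Rsum_cons. rewrite Rabs_R0; lra.
  eapply Rle_trans; [apply Rabs_triang|]. lra.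
Qed.

Lemma Rsum_const_bound {A} (l : list A) F c :
  (forall x, In x l -> F x <= c) -> Rsum l F <= INR (length l) * c.
Proof.
  induction l; intros H; rewrite ?Rsum_nil, ?Rsum_cons; simpl length; [simpl; lra|].
  rewrite S_INR.
  assert (F a <= c) by (apply H; left; auto).
  assert (Rsum l F <= INR (length l) * c) by (apply IHl; intros; apply H; right; auto). lra.
Qed.

Lemma NoDup_remove' {A} (dec : forall x y : A, {x = y} + {x <> y}) a (k : list A) :
  NoDup k -> NoDup (remove dec a k).
Proof.
  induction k; intros H; simpl; auto. inversion H; subst.
  destruct (dec a a0); auto. constructor; auto.
  intro Hin. apply in_remove in Hin. tauto.
Qed.

Lemma Rsum_remove {A} (dec : forall x y : A, {x = y} + {x <> y}) a (k : list A) F :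
  NoDup k -> In a k -> Rsum k F = F a + Rsum (remove dec a k) F.
Proof.
  induction k; intros H Hin; [destruct Hin|]. inversion H; subst. simpl.
  destruct (dec a a0).
  - subst. rewrite notin_remove by auto. reflexivity.
  - destruct Hin as [->|Hin]; [congruence|]. rewrite !Rsum_cons. rewrite IHk by auto. lra.
Qed.

Lemma Rsum_collapse {A} (dec : forall x y : A, {x = y} + {x <> y}) (l k : list A) F :
  NoDup l -> NoDup k -> incl k l ->
  (forall x, In x l -> ~ In x k -> F x = 0) -> Rsum l F = Rsum k F.
Proof.
  revert k; induction l as [|a l IH]; intros k Hl Hk Hinc HF.
  - destruct k as [|b k]; [reflexivity|]. exfalso; apply (Hinc b); left; auto.
  - inversion Hl; subst. rewrite Rsum_cons.
    destruct (in_dec dec a k) as [Ha|Ha].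
    + rewrite (Rsum_remove dec a k F Hk Ha). f_equal. apply IH; auto.
      * apply NoDup_remove'; auto.
      * intros x Hx. apply in_remove in Hx as [Hx1 Hx2].
        destruct (Hinc x Hx1) as [->|]; [congruence|auto].
      * intros x Hx Hnx. apply HF; [right; auto|]. intro Hxk. apply Hnx.
        apply in_in_remove; auto. intros ->; contradiction.
    + rewrite (HF a) by (auto; left; auto). rewrite Rplus_0_l. apply IH; auto.
      * intros x Hx. destruct (Hinc x Hx) as [->|]; [contradiction|auto].
      * intros x Hx Hnx. apply HF; [right; auto|auto].
Qed.

Definition H (x y : R) : R := Rmax 0 (1 - Rmax (Rabs x) (Rmax (Rabs y) (Rabs (x - y)))).

Ltac hsolve := unfold H, Rmax; repeat destruct Rle_dec; unfold Rabs in *;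
  repeat destruct Rcase_abs; lra.

Lemma H_nonneg x y : 0 <= H x y.
Proof. unfold H; apply Rmax_l. Qed.

Lemma H_nz x y : H x y <> 0 -> Rabs x < 1 /\ Rabs y < 1 /\ Rabs (x - y) < 1.
Proof. intros Hn. unfold H, Rmax in Hn. repeat destruct Rle_dec; unfold Rabs in *;
  repeat destruct Rcase_abs; try lra. Qed.

Lemma Rmax_lip a b a' b' : Rabs (Rmax a b - Rmax a' b') <= Rabs (a - a') + Rabs (b - b').
Proof. unfold Rmax; repeat destruct Rle_dec; unfold Rabs; repeat destruct Rcase_abs; lra. Qed.

Lemma Rabs_lip a b : Rabs (Rabs a - Rabs b) <= Rabs (a - b).
Proof. unfold Rabs; repeat destruct Rcase_abs; lra. Qed.

Lemma H_lip x y x' y' : Rabs (H x y - H x' y') <= 2 * (Rabs (x - x') + Rabs (y - y')).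
Proof.
  unfold H.
  set (m := Rmax (Rabs x) (Rmax (Rabs y) (Rabs (x - y)))).
  set (m' := Rmax (Rabs x') (Rmax (Rabs y') (Rabs (x' - y')))).
  assert (Hm : Rabs (m - m') <= 2 * (Rabs (x - x') + Rabs (y - y'))).
  { unfold m, m'. eapply Rle_trans; [apply Rmax_lip|].
    pose proof (Rmax_lip (Rabs y) (Rabs (x - y)) (Rabs y') (Rabs (x' - y'))).
    pose proof (Rabs_lip x x'). pose proof (Rabs_lip y y').
    pose proof (Rabs_lip (x - y) (x' - y')).
    assert (Rabs (x - y - (x' - y')) <= Rabs (x - x') + Rabs (y - y')).
    { replace (x - y - (x' - y')) with ((x - x') - (y - y')) by ring.
      unfold Rminus at 1. eapply Rle_trans; [apply Rabs_triang|]. rewrite Rabs_Ropp; lra. }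
    pose proof (Rabs_pos (x - x')). pose proof (Rabs_pos (y-y')). lra. }
  eapply Rle_trans; [|apply Hm].
  eapply Rle_trans; [apply Rmax_lip|]. rewrite Rminus_diag, Rabs_R0.
  replace (1 - m - (1 - m')) with (- (m - m')) by ring. rewrite Rabs_Ropp; lra.
Qed.

Record prm := { l1 : nat; l2 : nat; l3 : nat; gg : Z; uu : Z; c1 : Z; c2 : Z }.

Definition nn p := (l1 p + l2 p + l3 p)%nat.
Definition ZL1 p := Z.of_nat (l1 p).
Definition ZL2 p := Z.of_nat (l2 p).
Definition ZL3 p := Z.of_nat (l3 p).
Definition ZN p := Z.of_nat (nn p).

Record good (p : prm) : Prop := {
  pos1 : (0 < l1 p)%nat; pos2 : (0 < l2 p)%nat; pos3 : (0 < l3 p)%nat;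
  d12 : l1 p <> l2 p; d13 : l1 p <> l3 p; d23 : l2 p <> l3 p;
  s1 : l1 p <> (l2 p + l3 p)%nat; s2 : l2 p <> (l1 p + l3 p)%nat;
  s3 : l3 p <> (l1 p + l2 p)%nat;
  gpos : (0 < gg p)%Z; gdiv1 : (gg p | ZL1 p)%Z; gdivN : (gg p | ZN p)%Z;
  bez : exists w, (uu p * ZL1 p + w * ZN p = gg p)%Z;
  gcop : Z.gcd (gg p) (ZL2 p) = 1%Z;
  gcop2 : Z.gcd (ZL1 p / gg p) (ZN p / gg p) = 1%Z;
  ccond : ((c1 p * ZL1 p + c2 p * ZL2 p) mod ZN p = 1)%Z }.

Ltac unf := unfold ZN, nn, ZL1, ZL2, ZL3 in *.

Ltac gfacts Hg := pose proof (pos1 _ Hg); pose proof (pos2 _ Hg); pose proof (pos3 _ Hg);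
  pose proof (d12 _ Hg); pose proof (d13 _ Hg); pose proof (d23 _ Hg);
  pose proof (s1 _ Hg); pose proof (s2 _ Hg); pose proof (s3 _ Hg).

Lemma ZN_pos p : good p -> (0 < ZN p)%Z.
Proof. intros Hg; gfacts Hg; unf; lia. Qed.

Open Scope Z_scope.

Definition phi p (W : Z * Z) : Z := fst W * ZL1 p + snd W * ZL2 p.
Definition cls p (W : Z * Z) : nat := Z.to_nat (phi p W mod ZN p).

Definition dd p (r : Z) : Z * Z :=
  if Z.eqb r 0 then (0, 0) else
  if Z.eqb r (ZL1 p) then (1, 0) else
  if Z.eqb r (ZL2 p) then (0, 1) else
  if Z.eqb r (ZL3 p) then (-1, -1) else
  if Z.eqb r (ZN p - ZL1 p) then (-1, 0) else
  if Z.eqb r (ZN p - ZL2 p) then (0, -1) else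
  if Z.eqb r (ZN p - ZL3 p) then (1, 1) else (0, 0).

Definition delta p (u w : nat) : Z * Z := dd p ((Z.of_nat w - Z.of_nat u) mod ZN p).

Definition inD (d : Z * Z) : Prop :=
  let (x, y) := d in
  (x = 0 /\ y = 0) \/ (x = 1 /\ y = 0) \/ (x = 0 /\ y = 1) \/ (x = -1 /\ y = -1) \/
  (x = -1 /\ y = 0) \/ (x = 0 /\ y = -1) \/ (x = 1 /\ y = 1).

Definition padd (a b : Z * Z) : Z * Z := (fst a + fst b, snd a + snd b).
Definition psub (a b : Z * Z) : Z * Z := (fst a - fst b, snd a - snd b).

Lemma mod_val a b r : 0 <= r < b -> (exists q, a = q * b + r) -> a mod b = r.
Proof. intros Hr [q ->]. symmetry; apply (Z.mod_unique _ _ q); lia. Qed.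

Lemma dd_phi p d : good p -> inD d -> dd p (phi p d mod ZN p) = d.
Proof.
  intros Hg Hd. gfacts Hg. destruct d as [x y]; simpl in Hd. unfold phi; simpl.
  destruct Hd as [[-> ->]|[[-> ->]|[[-> ->]|[[-> ->]|[[-> ->]|[[-> ->]|[-> ->]]]]]]];
  match goal with |- dd p ?r = _ =>
    let r' := fresh "r" in
    first [ assert (Hr : r = 0) by (apply mod_val; [unf; lia| exists 0; unf; lia])
          | assert (Hr : r = ZL1 p) by (apply mod_val; [unf; lia| exists 0; unf; lia])
          | assert (Hr : r = ZL2 p) by (apply mod_val; [unf; lia| exists 0; unf; lia])
          | assert (Hr : r = ZL3 p) by (apply mod_val; [unf; lia| exists (-1); unf; lia])
          | assert (Hr : r = ZN p - ZL1 p) by (apply mod_val; [unf; lia| exists (-1); unf; lia])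
          | assert (Hr : r = ZN p - ZL2 p) by (apply mod_val; [unf; lia| exists (-1); unf; lia])
          | assert (Hr : r = ZN p - ZL3 p) by (apply mod_val; [unf; lia| exists 0; unf; lia]) ];
    rewrite Hr
  end;
  unfold dd;
  repeat match goal with |- context [Z.eqb ?a ?b] =>
    destruct (Z.eqb_spec a b); cbv beta iota end;
  first [reflexivity | exfalso; unf; lia].
Qed.

Lemma cls_spec p W : good p -> Z.of_nat (cls p W) = phi p W mod ZN p.
Proof.
  intros Hg. pose proof (ZN_pos p Hg). unfold cls.
  rewrite Z2Nat.id; [auto|]. apply Z.mod_pos_bound; lia.
Qed.

Lemma cls_lt p W : good p -> (cls p W < nn p)%nat.
Proof.
  intros Hg. pose proof (ZN_pos p Hg). pose proof (cls_spec p W Hg).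
  pose proof (Z.mod_pos_bound (phi p W) (ZN p)). unfold ZN in *. lia.
Qed.

Lemma phi_sub p a b : phi p (psub a b) = phi p a - phi p b.
Proof. unfold phi, psub; simpl; ring. Qed.

Lemma phi_add p a b : phi p (padd a b) = phi p a + phi p b.
Proof. unfold phi, padd; simpl; ring. Qed.

Lemma delta_diff p W W' : good p -> inD (psub W' W) ->
  delta p (cls p W) (cls p W') = psub W' W.
Proof.
  intros Hg Hd. unfold delta. rewrite !cls_spec by auto.
  rewrite <- Zminus_mod. rewrite <- phi_sub. apply dd_phi; auto.
Qed.

Lemma cls_inj p W W' : good p -> inD (psub W' W) -> cls p W = cls p W' -> W' = W.
Proof.
  intros Hg Hd He. pose proof (delta_diff p W W' Hg Hd) as H0. rewrite He in H0.
  unfold delta in H0. rewrite Z.sub_diag, Zmod_0_l in H0. unfold dd in H0.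
  simpl in H0. destruct W, W'; unfold psub in H0; simpl in H0. inversion H0.
  f_equal; lia.
Qed.

Definition e (a : nat) : Z * Z := match a with 0%nat => (1, 0) | 1%nat => (0, 1) | _ => (-1, -1) end.

Definition vert (W : Z * Z) (a b : nat) (i : nat) : Z * Z :=
  match i with 0%nat => W | 1%nat => padd W (e a) | _ => padd (padd W (e a)) (e b) end.

Lemma tri_D W a b i j : (a < 3)%nat -> (b < 3)%nat -> a <> b -> (i < 3)%nat -> (j < 3)%nat ->
  inD (psub (vert W a b j) (vert W a b i)).
Proof.
  intros Ha Hb Hab Hi Hj. destruct W as [w1 w2].
  destruct a as [|[|[|a]]]; try lia; destruct b as [|[|[|b]]]; try lia;
  destruct i as [|[|[|i]]]; try lia; destruct j as [|[|[|j]]]; try lia;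
  unfold inD, vert, psub, padd, e; simpl; lia.
Qed.

Lemma tri_cls_inj p W a b i j : good p -> (a < 3)%nat -> (b < 3)%nat -> a <> b ->
  (i < 3)%nat -> (j < 3)%nat -> cls p (vert W a b i) = cls p (vert W a b j) -> i = j.
Proof.
  intros Hg Ha Hb Hab Hi Hj He.
  pose proof (cls_inj p _ _ Hg (tri_D W a b i j Ha Hb Hab Hi Hj) He) as H.
  destruct W as [w1 w2].
  destruct a as [|[|[|a]]]; try lia; destruct b as [|[|[|b]]]; try lia;
  destruct i as [|[|[|i]]]; try lia; destruct j as [|[|[|j]]]; try lia;
  unfold vert, padd, e in H; simpl in H; inversion H; lia.
Qed.

Open Scope R_scope.

Definition Zsum p (f : nat -> R) (u : nat) : R * R :=
  (IZR (Z.of_nat u * c1 p) + Rsum (seq 0 (nn p)) (fun w => f w * IZR (fst (delta p u w))),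
   IZR (Z.of_nat u * c2 p) + Rsum (seq 0 (nn p)) (fun w => f w * IZR (snd (delta p u w)))).

Definition supp_tri p (f : nat -> R) W a b : Prop :=
  forall w, (w < nn p)%nat -> f w <> 0 -> exists j, (j < 3)%nat /\ w = cls p (vert W a b j).

Lemma sum3 p f W a b (Phi : nat -> R) : good p -> (a < 3)%nat -> (b < 3)%nat -> a <> b ->
  supp_tri p f W a b ->
  Rsum (seq 0 (nn p)) (fun w => f w * Phi w) =
  f (cls p (vert W a b 0)) * Phi (cls p (vert W a b 0)) +
  f (cls p (vert W a b 1)) * Phi (cls p (vert W a b 1)) +
  f (cls p (vert W a b 2)) * Phi (cls p (vert W a b 2)).
Proof.
  intros Hg Ha Hb Hab Hs.
  rewrite (Rsum_collapse Nat.eq_dec (seq 0 (nn p))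
             [cls p (vert W a b 0); cls p (vert W a b 1); cls p (vert W a b 2)]).
  - rewrite !Rsum_cons, Rsum_nil. ring.
  - apply seq_NoDup.
  - assert (Hi := fun i j => tri_cls_inj p W a b i j Hg Ha Hb Hab).
    repeat constructor.
    + intros [H|[H|H]]; [apply Hi in H|apply Hi in H|]; auto; lia.
    + intros [H|H]; [apply Hi in H|]; auto; lia.
    + auto.
  - intros x Hx. apply in_seq. simpl in Hx.
    destruct Hx as [<-|[<-|[<-|[]]]]; split; try lia; apply cls_lt; auto.
  - intros x Hx Hn. apply in_seq in Hx.
    destruct (Req_dec_T (f x) 0) as [->|Hf]; [ring|].
    destruct (Hs x ltac:(lia) Hf) as [j [Hj ->]]. exfalso. apply Hn.
    destruct j as [|[|[|j]]]; simpl; auto; lia.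
Qed.

Lemma aux3 a0 a1 a2 x0 x1 x2 y c : 1 = a0 * 1 + a1 * 1 + a2 * 1 ->
  c + (a0 * (x0 - y) + a1 * (x1 - y) + a2 * (x2 - y)) =
  a0 * x0 + a1 * x1 + a2 * x2 + (c - y).
Proof. intros E. assert (E' : a2 = 1 - a0 - a1) by lra. rewrite E'; ring. Qed.

Lemma lemK p f W a b i u : good p -> (a < 3)%nat -> (b < 3)%nat -> a <> b ->
  supp_tri p f W a b -> Rsum (seq 0 (nn p)) f = 1 ->
  (i < 3)%nat -> u = cls p (vert W a b i) ->
  exists k1 k2, (phi p (k1, k2) mod ZN p = 0)%Z /\
    fst (Zsum p f u) = f (cls p (vert W a b 0)) * IZR (fst (vert W a b 0)) +
                       f (cls p (vert W a b 1)) * IZR (fst (vert W a b 1)) +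
                       f (cls p (vert W a b 2)) * IZR (fst (vert W a b 2)) + IZR k1 /\
    snd (Zsum p f u) = f (cls p (vert W a b 0)) * IZR (snd (vert W a b 0)) +
                       f (cls p (vert W a b 1)) * IZR (snd (vert W a b 1)) +
                       f (cls p (vert W a b 2)) * IZR (snd (vert W a b 2)) + IZR k2.
Proof.
  intros Hg Ha Hb Hab Hs H1 Hi Hu.
  assert (Hf1 := sum3 p f W a b (fun _ => 1) Hg Ha Hb Hab Hs).
  rewrite (Rsum_ext_in _ _ f) in Hf1 by (intros; ring). rewrite H1 in Hf1.
  exists (Z.of_nat u * c1 p - fst (vert W a b i))%Z, (Z.of_nat u * c2 p - snd (vert W a b i))%Z.
  assert (Hd : forall j, (j < 3)%nat -> delta p u (cls p (vert W a b j)) =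
                 psub (vert W a b j) (vert W a b i)).
  { intros j Hj. subst u. apply delta_diff; auto. apply tri_D; auto. }
  split; [|split].
  - pose proof (cls_spec p (vert W a b i) Hg) as Hc. rewrite <- Hu in Hc.
    pose proof (ccond p Hg) as Hcc. pose proof (ZN_pos p Hg).
    unfold phi in *; simpl.
    replace ((Z.of_nat u * c1 p - fst (vert W a b i)) * ZL1 p +
             (Z.of_nat u * c2 p - snd (vert W a b i)) * ZL2 p)%Z with
      (Z.of_nat u * (c1 p * ZL1 p + c2 p * ZL2 p) -
       (fst (vert W a b i) * ZL1 p + snd (vert W a b i) * ZL2 p))%Z by ring.
    assert (Hum : (Z.of_nat u mod ZN p = Z.of_nat u)%Z) by (rewrite Hc, Z.mod_mod; lia).
    rewrite Zminus_mod, Z.mul_mod, Hcc, <- Hc by lia. rewrite Z.mul_1_r.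
    rewrite Z.mod_mod by lia. rewrite Hum, Z.sub_diag. reflexivity.
  - unfold Zsum; simpl fst.
    rewrite (sum3 p f W a b (fun w => IZR (fst (delta p u w)))) by auto.
    rewrite !Hd by lia. unfold psub; simpl fst. rewrite !minus_IZR.
    apply aux3; exact Hf1.
  - unfold Zsum; simpl snd.
    rewrite (sum3 p f W a b (fun w => IZR (snd (delta p u w)))) by auto.
    rewrite !Hd by lia. unfold psub; simpl snd. rewrite !minus_IZR.
    apply aux3; exact Hf1.
Qed.

Definition peqb (a b : Z * Z) : bool := (Z.eqb (fst a) (fst b) && Z.eqb (snd a) (snd b))%bool.

Lemma peqb_spec a b : peqb a b = true <-> a = b.
Proof.
  destruct a as [x y], b as [x' y']; unfold peqb; simpl.
  rewrite Bool.andb_true_iff, !Z.eqb_eq. split; [intros [-> ->]; auto|intros H; inversion H; auto].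
Qed.

Definition hatv (a b : nat) (t1 t2 : R) (d : Z * Z) : R :=
  if peqb d (0, 0)%Z then 1 - t1 - t2 else
  if peqb d (e a) then t1 else
  if peqb d (padd (e a) (e b)) then t2 else 0.

Lemma B_rel a b t1 t2 d1 d2 : (a < 3)%nat -> (b < 3)%nat -> a <> b ->
  0 <= t1 -> 0 <= t2 -> t1 + t2 <= 1 ->
  H (t1 * IZR (fst (e a)) + t2 * IZR (fst (padd (e a) (e b))) - IZR d1)
    (t1 * IZR (snd (e a)) + t2 * IZR (snd (padd (e a) (e b))) - IZR d2) =
  hatv a b t1 t2 (d1, d2).
Proof.
  intros Ha Hb Hab Ht1 Ht2 Ht.
  destruct (Req_dec_T (H (t1 * IZR (fst (e a)) + t2 * IZR (fst (padd (e a) (e b))) - IZR d1)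
    (t1 * IZR (snd (e a)) + t2 * IZR (snd (padd (e a) (e b))) - IZR d2)) 0) as [Hz|Hn].
  - unfold hatv. rewrite Hz.
    destruct (peqb (d1, d2) (0, 0)%Z) eqn:E0;
    [apply peqb_spec in E0; inversion E0; subst;
     destruct a as [|[|[|a]]]; try lia; destruct b as [|[|[|b]]]; try lia;
     simpl in Hz; revert Hz; hsolve|].
    destruct (peqb (d1, d2) (e a)) eqn:E1;
    [apply peqb_spec in E1; destruct a as [|[|[|a]]]; try lia;
     destruct b as [|[|[|b]]]; try lia; simpl in E1; inversion E1; subst;
     simpl in Hz; revert Hz; hsolve|].
    destruct (peqb (d1, d2) (padd (e a) (e b))) eqn:E2;
    [apply peqb_spec in E2; destruct a as [|[|[|a]]]; try lia;
     destruct b as [|[|[|b]]]; try lia; simpl in E2; inversion E2; subst;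
     simpl in Hz; revert Hz; hsolve|].
    reflexivity.
  - apply H_nz in Hn. destruct Hn as [A1 [A2 _]].
    assert (B1 : -2 < IZR d1 < 2).
    { destruct a as [|[|[|a]]]; try lia; destruct b as [|[|[|b]]]; try lia;
      simpl in A1; revert A1; unfold Rabs; destruct Rcase_abs; intros; lra. }
    assert (B2 : -2 < IZR d2 < 2).
    { destruct a as [|[|[|a]]]; try lia; destruct b as [|[|[|b]]]; try lia;
      simpl in A2; revert A2; unfold Rabs; destruct Rcase_abs; intros; lra. }
    destruct B1 as [B1 B1']; destruct B2 as [B2 B2'].
    apply lt_IZR in B1, B1', B2, B2'.
    assert (D1 : (d1 = -1 \/ d1 = 0 \/ d1 = 1)%Z) by lia.
    assert (D2 : (d2 = -1 \/ d2 = 0 \/ d2 = 1)%Z) by lia.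
    destruct a as [|[|[|a]]]; try lia; destruct b as [|[|[|b]]]; try lia;
    destruct D1 as [-> | [-> | ->]]; destruct D2 as [-> | [-> | ->]];
    unfold hatv; simpl; clear A1 A2; hsolve.
Qed.

Definition pdec : forall x y : Z * Z, {x = y} + {x <> y}.
Proof. decide equality; apply Z.eq_dec. Defined.

Definition hterm p (z : R * R) (v : nat) (W : Z * Z) : R :=
  if Nat.eqb (cls p W) v then H (fst z - IZR (fst W)) (snd z - IZR (snd W)) else 0.

Definition cell (z : R * R) : list (Z * Z) :=
  let P := Int_part (fst z) in let Q := Int_part (snd z) in
  [(P, Q); (P + 1, Q)%Z; (P, Q + 1)%Z; (P + 1, Q + 1)%Z].

Definition G p (z : R * R) (v : nat) : R :=
  if Nat.ltb v (nn p) then Rsum (cell z) (hterm p z v) else 0.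

Lemma Ip_bounds x : IZR (Int_part x) <= x < IZR (Int_part x) + 1.
Proof. destruct (base_Int_part x). lra. Qed.

Lemma int_near k x w : IZR k <= x < IZR k + 1 -> Rabs (x - IZR w) < 1 -> (w = k \/ w = k + 1)%Z.
Proof.
  intros [H1 H2] H3. apply Rabs_def2 in H3. destruct H3 as [H3 H4].
  assert (E1 : IZR w < IZR (k + 2)) by (rewrite plus_IZR; lra).
  assert (E2 : IZR (k - 1) < IZR w) by (rewrite minus_IZR; lra).
  apply lt_IZR in E1, E2. lia.
Qed.

Lemma active_cell z W : H (fst z - IZR (fst W)) (snd z - IZR (snd W)) <> 0 -> In W (cell z).
Proof.
  intros Hn. apply H_nz in Hn. destruct Hn as [A1 [A2 _]].
  apply int_near with (k := Int_part (fst z)) in A1; [|apply Ip_bounds].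
  apply int_near with (k := Int_part (snd z)) in A2; [|apply Ip_bounds].
  destruct W as [w1 w2]; simpl in *. unfold cell.
  destruct A1 as [->| ->]; destruct A2 as [->| ->]; simpl; tauto.
Qed.

Lemma cell_NoDup z : NoDup (cell z).
Proof.
  unfold cell. repeat constructor; simpl; intro Hin;
  repeat destruct Hin as [Hin|Hin]; try (inversion Hin; lia); try contradiction.
Qed.

Lemma G_any p z v l : NoDup l -> incl (cell z) l -> (v < nn p)%nat ->
  G p z v = Rsum l (hterm p z v).
Proof.
  intros Hl Hinc Hv. unfold G. replace (Nat.ltb v (nn p)) with true by (symmetry; apply Nat.ltb_lt; auto).
  symmetry. apply (Rsum_collapse pdec); auto. apply cell_NoDup.
  intros W _ Hn. unfold hterm. destruct (Nat.eqb (cls p W) v); auto.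
  destruct (Req_dec_T (H (fst z - IZR (fst W)) (snd z - IZR (snd W))) 0); auto.
  exfalso; apply Hn, active_cell; auto.
Qed.

Lemma Int_part_shift x k : Int_part (x + IZR k) = (Int_part x + k)%Z.
Proof.
  symmetry. apply Int_part_spec. rewrite plus_IZR. pose proof (Ip_bounds x). lra.
Qed.

Lemma cls_shift p W k1 k2 : good p -> (phi p (k1, k2) mod ZN p = 0)%Z ->
  cls p (padd W (k1, k2)) = cls p W.
Proof.
  intros Hg Hk. unfold cls. f_equal. rewrite phi_add. pose proof (ZN_pos p Hg).
  rewrite Zplus_mod, Hk, Z.add_0_r, Z.mod_mod; lia.
Qed.

Lemma Rsum_map {A B} (g : A -> B) l F : Rsum (map g l) F = Rsum l (fun x => F (g x)).
Proof. unfold Rsum; rewrite map_map; reflexivity. Qed.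

Lemma cell_shift z k1 k2 : cell (fst z + IZR k1, snd z + IZR k2) =
  map (fun W => padd W (k1, k2)) (cell z).
Proof.
  unfold cell; simpl fst; simpl snd. rewrite !Int_part_shift. simpl.
  unfold padd; simpl.
  replace (Int_part (fst z) + 1 + k1)%Z with (Int_part (fst z) + k1 + 1)%Z by ring.
  replace (Int_part (snd z) + 1 + k2)%Z with (Int_part (snd z) + k2 + 1)%Z by ring.
  reflexivity.
Qed.

Lemma hterm_shift p z v W k1 k2 : good p -> (phi p (k1, k2) mod ZN p = 0)%Z ->
  hterm p (fst z + IZR k1, snd z + IZR k2) v (padd W (k1, k2)) = hterm p z v W.
Proof.
  intros Hg Hk. unfold hterm. rewrite cls_shift by auto.
  destruct (Nat.eqb _ _); auto. unfold padd; simpl. rewrite !plus_IZR. f_equal; ring.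
Qed.

Lemma G_period p z k1 k2 : good p -> (phi p (k1, k2) mod ZN p = 0)%Z ->
  forall v, G p (fst z + IZR k1, snd z + IZR k2) v = G p z v.
Proof.
  intros Hg Hk v. unfold G. destruct (Nat.ltb v (nn p)); auto.
  rewrite cell_shift, Rsum_map. apply Rsum_ext_in. intros; apply hterm_shift; auto.
Qed.

Definition fbary p W a b t1 t2 (v : nat) : R :=
  if Nat.ltb v (nn p) then
    (if Nat.eqb (cls p (vert W a b 0)) v then 1 - t1 - t2 else 0) +
    (if Nat.eqb (cls p (vert W a b 1)) v then t1 else 0) +
    (if Nat.eqb (cls p (vert W a b 2)) v then t2 else 0)
  else 0.

Definition zbary W a b t1 t2 : R * R :=
  ((1 - t1 - t2) * IZR (fst (vert W a b 0)) + t1 * IZR (fst (vert W a b 1)) +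
     t2 * IZR (fst (vert W a b 2)),
   (1 - t1 - t2) * IZR (snd (vert W a b 0)) + t1 * IZR (snd (vert W a b 1)) +
     t2 * IZR (snd (vert W a b 2))).

Lemma H_tri W a b t1 t2 W' : (a < 3)%nat -> (b < 3)%nat -> a <> b ->
  0 <= t1 -> 0 <= t2 -> t1 + t2 <= 1 ->
  H (fst (zbary W a b t1 t2) - IZR (fst W')) (snd (zbary W a b t1 t2) - IZR (snd W')) =
  hatv a b t1 t2 (psub W' W).
Proof.
  intros. destruct W as [w1 w2], W' as [x1 x2]. unfold psub; simpl fst; simpl snd.
  rewrite <- B_rel by auto. unfold zbary, vert, padd; simpl.
  rewrite !plus_IZR, !minus_IZR. f_equal; ring.
Qed.

Lemma hatv_v0 W a b t1 t2 : hatv a b t1 t2 (psub (vert W a b 0) W) = 1 - t1 - t2.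
Proof.
  destruct W as [w1 w2]; unfold psub, vert; simpl. rewrite !Z.sub_diag. reflexivity.
Qed.

Lemma psub_padd W d : psub (padd W d) W = d.
Proof. destruct W, d; unfold psub, padd; simpl; f_equal; ring. Qed.

Lemma hatv_v1 W a b t1 t2 : (a < 3)%nat -> hatv a b t1 t2 (psub (vert W a b 1) W) = t1.
Proof.
  intros Ha. unfold vert. rewrite psub_padd. unfold hatv.
  destruct a as [|[|[|a]]]; try lia; simpl; reflexivity.
Qed.

Lemma hatv_v2 W a b t1 t2 : (a < 3)%nat -> (b < 3)%nat -> a <> b ->
  hatv a b t1 t2 (psub (vert W a b 2) W) = t2.
Proof.
  intros Ha Hb Hab. unfold vert.
  replace (psub (padd (padd W (e a)) (e b)) W) with (padd (e a) (e b))
    by (destruct W, (e a), (e b); unfold psub, padd; simpl; f_equal; ring).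
  unfold hatv.
  destruct a as [|[|[|a]]]; try lia; destruct b as [|[|[|b]]]; try lia; simpl; reflexivity.
Qed.

Lemma hatv_out W a b t1 t2 W' :
  ~ In W' [vert W a b 0; vert W a b 1; vert W a b 2] -> hatv a b t1 t2 (psub W' W) = 0.
Proof.
  intros Hn. unfold hatv.
  destruct (peqb (psub W' W) (0, 0)%Z) eqn:E0.
  { apply peqb_spec in E0. exfalso; apply Hn. left. destruct W, W'; unfold psub, vert in *;
    simpl in *; inversion E0; f_equal; lia. }
  destruct (peqb (psub W' W) (e a)) eqn:E1.
  { apply peqb_spec in E1. exfalso; apply Hn. right; left. unfold vert.
    destruct W, W', (e a); unfold psub, padd in *; simpl in *; inversion E1; f_equal; lia. }
  destruct (peqb (psub W' W) (padd (e a) (e b))) eqn:E2.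
  { apply peqb_spec in E2. exfalso; apply Hn. right; right; left. unfold vert.
    destruct W, W', (e a), (e b); unfold psub, padd in *; simpl in *; inversion E2; f_equal; lia. }
  reflexivity.
Qed.

Lemma tri_NoDup p W a b : good p -> (a < 3)%nat -> (b < 3)%nat -> a <> b ->
  NoDup [vert W a b 0; vert W a b 1; vert W a b 2].
Proof.
  intros Hg Ha Hb Hab.
  assert (Hi : forall i j, (i < 3)%nat -> (j < 3)%nat -> vert W a b i = vert W a b j -> i = j).
  { intros i j Hi Hj E. apply (tri_cls_inj p W a b i j); auto. rewrite E; auto. }
  constructor; [|constructor; [|constructor; [|constructor]]].
  - intros [E|[E|[]]]; apply Hi in E; lia.
  - intros [E|[]]; apply Hi in E; lia.
  - intros [].
Qed.

Lemma G_bary p W a b t1 t2 v : good p -> (a < 3)%nat -> (b < 3)%nat -> a <> b ->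
  0 <= t1 -> 0 <= t2 -> t1 + t2 <= 1 ->
  G p (zbary W a b t1 t2) v = fbary p W a b t1 t2 v.
Proof.
  intros Hg Ha Hb Hab Ht1 Ht2 Ht.
  destruct (Nat.ltb v (nn p)) eqn:Ev.
  2: { unfold G, fbary; rewrite Ev; reflexivity. }
  apply Nat.ltb_lt in Ev.
  set (z := zbary W a b t1 t2).
  set (T := [vert W a b 0; vert W a b 1; vert W a b 2]).
  rewrite (G_any p z v (nodup pdec (cell z ++ T))); auto.
  2: apply NoDup_nodup.
  2: { intros x Hx; apply nodup_In, in_app_iff; auto. }
  rewrite (Rsum_collapse pdec _ T).
  - unfold T; rewrite !Rsum_cons, Rsum_nil. unfold hterm, fbary.
    replace (Nat.ltb v (nn p)) with true by (symmetry; apply Nat.ltb_lt; auto).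
    unfold z; rewrite !H_tri by auto. rewrite hatv_v0, hatv_v1, hatv_v2 by auto.
    destruct (Nat.eqb _ _); destruct (Nat.eqb _ _); destruct (Nat.eqb _ _); ring.
  - apply NoDup_nodup.
  - apply (tri_NoDup p); auto.
  - intros x Hx; apply nodup_In, in_app_iff; auto.
  - intros x _ Hx. unfold hterm. destruct (Nat.eqb _ _); auto.
    unfold z; rewrite H_tri by auto. apply hatv_out; auto.
Qed.

Definition sig3 (a b : nat) (i : nat) : nat :=
  match i with 0%nat => a | 1%nat => b | _ => (3 - a - b)%nat end.

Lemma mod_eq_of N x y k : (0 < N)%Z -> (x = y + k * N)%Z -> (x mod N = y mod N)%Z.
Proof. intros HN ->. apply Z_mod_plus_full. Qed.

Lemma cls_vert p W a b j : good p -> (a < 3)%nat -> (b < 3)%nat -> a <> b -> (j < 3)%nat ->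
  cls p (vert W a b j) =
  ((cls p W + psum (L3 (l1 p) (l2 p) (l3 p)) (sig3 a b) j) mod nn p)%nat.
Proof.
  intros Hg Ha Hb Hab Hj. pose proof (ZN_pos p Hg) as HN.
  apply Nat2Z.inj. rewrite cls_spec, Nat2Z.inj_mod, Nat2Z.inj_add, cls_spec by auto.
  fold (ZN p). rewrite Z.add_mod_idemp_l by lia.
  destruct W as [w1 w2].
  destruct a as [|[|[|a]]]; try lia; destruct b as [|[|[|b]]]; try lia;
  destruct j as [|[|[|j]]]; try lia;
  unfold vert, padd, phi, e, psum, sig3, L3; simpl;
  first [ apply (mod_eq_of _ _ _ 0); [lia|unf; lia]
        | apply (mod_eq_of _ _ _ (-1)); [lia|unf; lia]
        | apply (mod_eq_of _ _ _ (-2)); [lia|unf; lia] ].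
Qed.

Lemma fbary_vals p W a b t1 t2 : good p -> (a < 3)%nat -> (b < 3)%nat -> a <> b ->
  fbary p W a b t1 t2 (cls p (vert W a b 0)) = 1 - t1 - t2 /\
  fbary p W a b t1 t2 (cls p (vert W a b 1)) = t1 /\
  fbary p W a b t1 t2 (cls p (vert W a b 2)) = t2.
Proof.
  intros Hg Ha Hb Hab.
  assert (Hn : forall i j, (i < 3)%nat -> (j < 3)%nat -> i <> j ->
     Nat.eqb (cls p (vert W a b i)) (cls p (vert W a b j)) = false).
  { intros i j Hi Hj Hij. apply Nat.eqb_neq. intro E. apply Hij.
    apply (tri_cls_inj p W a b i j); auto. }
  unfold fbary. rewrite !(proj2 (Nat.ltb_lt _ _)) by (apply cls_lt; auto).
  rewrite !Nat.eqb_refl. rewrite !Hn by lia. repeat split; ring.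
Qed.

Lemma fbary_supp p W a b t1 t2 : supp_tri p (fbary p W a b t1 t2) W a b.
Proof.
  intros w Hw Hf. unfold fbary in Hf.
  destruct (Nat.eqb_spec (cls p (vert W a b 0)) w); [exists 0%nat; split; auto; lia|].
  destruct (Nat.eqb_spec (cls p (vert W a b 1)) w); [exists 1%nat; split; auto; lia|].
  destruct (Nat.eqb_spec (cls p (vert W a b 2)) w); [exists 2%nat; split; auto; lia|].
  exfalso. apply Hf. destruct (Nat.ltb _ _); ring.
Qed.

Lemma fbary_sum p W a b t1 t2 : good p -> (a < 3)%nat -> (b < 3)%nat -> a <> b ->
  Rsum (seq 0 (nn p)) (fbary p W a b t1 t2) = 1.
Proof.
  intros Hg Ha Hb Hab.
  pose proof (sum3 p (fbary p W a b t1 t2) W a b (fun _ => 1) Hg Ha Hb Hab (fbary_supp p W a b t1 t2)) as S.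
  rewrite (Rsum_ext_in _ _ (fbary p W a b t1 t2)) in S by (intros; ring).
  rewrite S. destruct (fbary_vals p W a b t1 t2 Hg Ha Hb Hab) as [-> [-> ->]]. ring.
Qed.

Lemma fbary_A p W a b t1 t2 : good p -> (a < 3)%nat -> (b < 3)%nat -> a <> b ->
  0 <= t1 -> 0 <= t2 -> t1 + t2 <= 1 ->
  tonnetz_realization (nn p) 3 (L3 (l1 p) (l2 p) (l3 p)) (fbary p W a b t1 t2).
Proof.
  intros Hg Ha Hb Hab Ht1 Ht2 Ht. split; [|split; [|split]].
  - intros v. unfold fbary. destruct (Nat.ltb _ _); [|lra].
    repeat destruct (Nat.eqb _ _); lra.
  - intros v Hv. unfold fbary. replace (Nat.ltb v (nn p)) with false; auto.
    symmetry; apply Nat.ltb_ge; auto.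
  - apply fbary_sum; auto.
  - exists (cls p W), (sig3 a b). split; [apply cls_lt; auto|split].
    + split.
      * intros i Hi. destruct i as [|[|[|i]]]; unfold sig3; lia.
      * intros i j Hi Hj E. destruct i as [|[|[|i]]]; destruct j as [|[|[|j]]];
        unfold sig3 in E; lia.
    + intros v Hv.
      destruct (Nat.lt_ge_cases v (nn p)) as [Hlt|Hge].
      2: { exfalso; apply Hv. unfold fbary. replace (Nat.ltb v (nn p)) with false; auto.
           symmetry; apply Nat.ltb_ge; auto. }
      destruct (fbary_supp p W a b t1 t2 v ltac:(auto) Hv) as [j [Hj ->]].
      exists j. split; auto. apply cls_vert; auto.
Qed.

Lemma G_cell p z : good p -> exists W a b t1 t2,
  (a < 3)%nat /\ (b < 3)%nat /\ a <> b /\ 0 <= t1 /\ 0 <= t2 /\ t1 + t2 <= 1 /\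
  z = zbary W a b t1 t2 /\ (forall v, G p z v = fbary p W a b t1 t2 v).
Proof.
  intros Hg.
  assert (Hz : exists W a b t1 t2,
    (a < 3)%nat /\ (b < 3)%nat /\ a <> b /\ 0 <= t1 /\ 0 <= t2 /\ t1 + t2 <= 1 /\
    z = zbary W a b t1 t2).
  { destruct z as [x y].
    pose proof (Ip_bounds x) as Bx. pose proof (Ip_bounds y) as By.
    set (P := Int_part x) in *. set (Q := Int_part y) in *.
    destruct (Rle_dec (y - IZR Q) (x - IZR P)).
    - exists (P, Q), 0%nat, 1%nat, ((x - IZR P) - (y - IZR Q)), (y - IZR Q).
      repeat split; try lia; try lra.
      unfold zbary, vert, padd, e; simpl. rewrite !plus_IZR. f_equal; ring.
    - exists (P, Q), 1%nat, 0%nat, ((y - IZR Q) - (x - IZR P)), (x - IZR P).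
      repeat split; try lia; try lra.
      unfold zbary, vert, padd, e; simpl. rewrite !plus_IZR. f_equal; ring. }
  destruct Hz as [W [a [b [t1 [t2 [Ha [Hb [Hab [H1 [H2 [H3 Hz]]]]]]]]]]].
  exists W, a, b, t1, t2. repeat split; auto.
  intros v. rewrite Hz. apply G_bary; auto.
Qed.

Lemma G_A p z : good p -> tonnetz_realization (nn p) 3 (L3 (l1 p) (l2 p) (l3 p)) (G p z).
Proof.
  intros Hg. destruct (G_cell p z Hg) as [W [a [b [t1 [t2 [Ha [Hb [Hab [H1 [H2 [H3 [Hz HG]]]]]]]]]]]].
  assert (E : G p z = fbary p W a b t1 t2) by (extensionality v; auto).
  rewrite E. apply fbary_A; auto.
Qed.

Definition xi p (z : R * R) : R * R :=
  ((IZR (gg p) * fst z + IZR (uu p * ZL2 p) * snd z) / IZR (ZN p), snd z / IZR (gg p)).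

Definition Mm p (s : R * R) : R * R :=
  (fst s * IZR (ZN p / gg p) - snd s * IZR (uu p * ZL2 p), snd s * IZR (gg p)).

Lemma N_eq p : good p -> ZN p = (gg p * (ZN p / gg p))%Z.
Proof.
  intros Hg. pose proof (gpos p Hg). apply Zdivide_Zdiv_eq; [lia|apply gdivN; auto].
Qed.

Lemma L1_eq p : good p -> ZL1 p = (gg p * (ZL1 p / gg p))%Z.
Proof.
  intros Hg. pose proof (gpos p Hg). apply Zdivide_Zdiv_eq; [lia|apply gdiv1; auto].
Qed.

Lemma xi_M p s : good p -> xi p (Mm p s) = s.
Proof.
  intros Hg. pose proof (gpos p Hg). pose proof (ZN_pos p Hg).
  pose proof (N_eq p Hg) as HN.
  assert (Gn : IZR (gg p) <> 0) by (apply not_0_IZR; lia).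
  assert (Nn : IZR (ZN p) <> 0) by (apply not_0_IZR; lia).
  destruct s as [s t]. unfold xi, Mm; simpl. f_equal; [|field; auto].
  assert (E : IZR (ZN p) = IZR (gg p) * IZR (ZN p / gg p)) by (rewrite <- mult_IZR, <- HN; auto).
  rewrite E in *. field. repeat split; auto; intro Z0; apply Nn; rewrite Z0; ring.
Qed.

Lemma M_xi p z : good p -> Mm p (xi p z) = z.
Proof.
  intros Hg. pose proof (gpos p Hg). pose proof (ZN_pos p Hg).
  pose proof (N_eq p Hg) as HN.
  assert (Gn : IZR (gg p) <> 0) by (apply not_0_IZR; lia).
  assert (Nn : IZR (ZN p) <> 0) by (apply not_0_IZR; lia).
  destruct z as [x y]. unfold xi, Mm; simpl. f_equal; [|field; auto].
  assert (E : IZR (ZN p) = IZR (gg p) * IZR (ZN p / gg p)) by (rewrite <- mult_IZR, <- HN; auto).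
  rewrite E in *. field. repeat split; auto; intro Z0; apply Nn; rewrite Z0; ring.
Qed.

Lemma M_int p k1 k2 : good p -> exists m1 m2, (phi p (m1, m2) mod ZN p = 0)%Z /\
  Mm p (IZR k1, IZR k2) = (IZR m1, IZR m2).
Proof.
  intros Hg. destruct (bez p Hg) as [w Hw]. pose proof (ZN_pos p Hg).
  pose proof (N_eq p Hg) as HN. pose proof (L1_eq p Hg) as HL.
  exists (k1 * (ZN p / gg p) - k2 * (uu p * ZL2 p))%Z, (k2 * gg p)%Z. split.
  - apply mod_val; [lia|]. exists (k1 * (ZL1 p / gg p) + k2 * w * ZL2 p)%Z.
    unfold phi; simpl.
    set (Ng := (ZN p / gg p)%Z) in *. set (L1g := (ZL1 p / gg p)%Z) in *.
    rewrite HN. rewrite HL in *. rewrite HN in Hw.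
    match goal with |- ?a = ?b =>
      assert (Eq : (a - b = k2 * ZL2 p * (gg p - (uu p * (gg p * L1g) + w * (gg p * Ng))))%Z)
        by ring end.
    rewrite Hw, Z.sub_diag, Z.mul_0_r in Eq. lia.
  - unfold Mm; simpl. rewrite minus_IZR, !mult_IZR. reflexivity.
Qed.

Lemma lattice_xi p k1 k2 : good p -> (phi p (k1, k2) mod ZN p = 0)%Z ->
  exists m1 m2, forall z, xi p (fst z + IZR k1, snd z + IZR k2) =
    (fst (xi p z) + IZR m1, snd (xi p z) + IZR m2).
Proof.
  intros Hg Hk. destruct (bez p Hg) as [w Hw]. pose proof (ZN_pos p Hg).
  pose proof (gpos p Hg). pose proof (N_eq p Hg) as HN. pose proof (L1_eq p Hg) as HL.
  apply Z.mod_divide in Hk; [|lia]. unfold phi in Hk; simpl in Hk.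
  assert (Hg2 : (gg p | k2)%Z).
  { apply (Z.gauss _ (ZL2 p)); [|apply gcop; auto].
    replace (ZL2 p * k2)%Z with ((k1 * ZL1 p + k2 * ZL2 p) - k1 * ZL1 p)%Z by ring.
    apply Z.divide_sub_r.
    - eapply Z.divide_trans; [apply gdivN; auto|auto].
    - apply Z.divide_mul_r, gdiv1; auto. }
  destruct Hg2 as [m2 Hm2].
  set (X := (k1 + uu p * ZL2 p * m2)%Z).
  assert (HX : (ZN p | X * ZL1 p)%Z).
  { replace (X * ZL1 p)%Z with ((k1 * ZL1 p + k2 * ZL2 p) - ZN p * (w * ZL2 p * m2))%Z.
    - apply Z.divide_sub_r; auto. apply Z.divide_mul_l, Z.divide_refl.
    - unfold X. rewrite Hm2. rewrite <- Hw. ring. }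
  assert (HX2 : (ZN p / gg p | X)%Z).
  { apply (Z.gauss _ (ZL1 p / gg p)); [|rewrite Z.gcd_comm; apply gcop2; auto].
    rewrite HN, HL in HX.
    replace (X * (gg p * (ZL1 p / gg p)))%Z with (gg p * (ZL1 p / gg p * X))%Z in HX by ring.
    apply Z.mul_divide_cancel_l in HX; [auto|lia]. }
  destruct HX2 as [m1 Hm1].
  exists m1, m2. intros [x y]. unfold xi; simpl.
  assert (Gn : IZR (gg p) <> 0) by (apply not_0_IZR; lia).
  assert (Nn : IZR (ZN p) <> 0) by (apply not_0_IZR; lia).
  assert (E : (gg p * k1 + uu p * ZL2 p * k2 = m1 * ZN p)%Z).
  { rewrite HN, Hm2. replace (gg p * k1 + uu p * ZL2 p * (m2 * gg p))%Z with (gg p * X)%Z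
      by (unfold X; ring). rewrite Hm1. ring. }
  f_equal.
  - apply (f_equal IZR) in E. rewrite plus_IZR, !mult_IZR in E.
    replace (IZR m1) with ((IZR m1 * IZR (ZN p)) / IZR (ZN p)) by (field; auto).
    rewrite <- E. rewrite mult_IZR. field; auto.
  - rewrite Hm2, mult_IZR. field; auto.
Qed.

Lemma cos_Z x m : cos (x + 2 * PI * IZR m) = cos x.
Proof.
  destruct (Z_le_gt_dec 0 m) as [Hm|Hm].
  - rewrite <- (Z2Nat.id m Hm), <- INR_IZR_INZ.
    replace (x + 2 * PI * INR (Z.to_nat m)) with (x + 2 * INR (Z.to_nat m) * PI) by ring.
    apply cos_period.
  - assert (Hm' : (0 <= - m)%Z) by lia.
    rewrite <- (cos_period (x + 2 * PI * IZR m) (Z.to_nat (- m))).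
    rewrite INR_IZR_INZ, Z2Nat.id by auto. rewrite opp_IZR. f_equal; ring.
Qed.

Lemma sin_Z x m : sin (x + 2 * PI * IZR m) = sin x.
Proof.
  destruct (Z_le_gt_dec 0 m) as [Hm|Hm].
  - rewrite <- (Z2Nat.id m Hm), <- INR_IZR_INZ.
    replace (x + 2 * PI * INR (Z.to_nat m)) with (x + 2 * INR (Z.to_nat m) * PI) by ring.
    apply sin_period.
  - assert (Hm' : (0 <= - m)%Z) by lia.
    rewrite <- (sin_period (x + 2 * PI * IZR m) (Z.to_nat (- m))).
    rewrite INR_IZR_INZ, Z2Nat.id by auto. rewrite opp_IZR. f_equal; ring.
Qed.

Definition Psi (s : R * R) : R4 :=
  (cos (2 * PI * fst s), sin (2 * PI * fst s), (cos (2 * PI * snd s), sin (2 * PI * snd s))).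

Lemma Psi_shift s m1 m2 : Psi (fst s + IZR m1, snd s + IZR m2) = Psi s.
Proof.
  unfold Psi; simpl. rewrite !Rmult_plus_distr_l, cos_Z, sin_Z, cos_Z, sin_Z. reflexivity.
Qed.

Lemma Psi_torus s : torus2 (Psi s).
Proof.
  unfold Psi, torus2. split; rewrite <- !Rsqr_def, Rplus_comm; apply sin2_cos2.
Qed.

Definition ang (a b : R) : R :=
  if Rle_dec 0 b then acos a / (2 * PI) else 1 - acos a / (2 * PI).

Definition ang2 (q : R4) : R * R := let '(a, b, (c, d)) := q in (ang a b, ang c d).

Lemma cos_2PI_minus y : cos (2 * PI - y) = cos y.
Proof. rewrite cos_minus, cos_2PI, sin_2PI. ring. Qed.

Lemma sin_2PI_minus y : sin (2 * PI - y) = - sin y.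
Proof. rewrite sin_minus, cos_2PI, sin_2PI. ring. Qed.

Lemma ang_cs a b : a * a + b * b = 1 ->
  cos (2 * PI * ang a b) = a /\ sin (2 * PI * ang a b) = b.
Proof.
  intros Hab. assert (Ha : -1 <= a <= 1) by nra. pose proof PI_RGT_0.
  assert (Hs : sqrt (1 - a²) = Rabs b).
  { replace (1 - a²) with (b²) by (unfold Rsqr; lra). apply sqrt_Rsqr_abs. }
  unfold ang. destruct (Rle_dec 0 b).
  - replace (2 * PI * (acos a / (2 * PI))) with (acos a) by (field; lra).
    rewrite cos_acos, sin_acos, Hs by auto. rewrite Rabs_right by lra. auto.
  - replace (2 * PI * (1 - acos a / (2 * PI))) with (2 * PI - acos a) by (field; lra).
    rewrite cos_2PI_minus, sin_2PI_minus, cos_acos, sin_acos, Hs by auto.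
    rewrite Rabs_left by lra. split; [auto|ring].
Qed.

Lemma Psi_ang q : torus2 q -> Psi (ang2 q) = q.
Proof.
  destruct q as [[a b] [c d]]. unfold torus2; intros [H1 H2].
  unfold Psi, ang2; simpl. destruct (ang_cs a b H1) as [-> ->].
  destruct (ang_cs c d H2) as [-> ->]. reflexivity.
Qed.

Lemma ang_of t : exists k, ang (cos (2 * PI * t)) (sin (2 * PI * t)) = t - IZR k.
Proof.
  exists (Int_part t). pose proof PI_RGT_0.
  set (t' := t - IZR (Int_part t)). pose proof (Ip_bounds t) as B.
  assert (Bt : 0 <= t' < 1) by (unfold t'; lra).
  replace (2 * PI * t) with (2 * PI * t' + 2 * PI * IZR (Int_part t)) by (unfold t'; ring).
  rewrite cos_Z, sin_Z. fold t'. unfold ang.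
  destruct (Rle_dec (t') (1/2)) as [Hle|Hgt].
  - assert (Hs : 0 <= sin (2 * PI * t')) by (apply sin_ge_0; nra).
    destruct (Rle_dec 0 (sin (2 * PI * t'))); [|lra].
    rewrite acos_cos by nra. field. lra.
  - assert (Hs : sin (2 * PI * t') < 0) by (apply sin_lt_0; nra).
    destruct (Rle_dec 0 (sin (2 * PI * t'))); [lra|].
    rewrite <- cos_2PI_minus, acos_cos by nra. field. lra.
Qed.

Lemma abs_sin_le x : Rabs (sin x) <= Rabs x.
Proof.
  assert (K : forall y, 0 < y -> Rabs (sin y) <= y).
  { intros y Hy. pose proof (sin_lt_x y Hy). pose proof (SIN_bound y). pose proof PI_RGT_0.
    destruct (Rle_dec y PI).
    - assert (0 <= sin y) by (apply sin_ge_0; lra). rewrite Rabs_right; lra.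
    - pose proof PI2_1.
      unfold Rabs; destruct Rcase_abs; lra. }
  destruct (Rtotal_order x 0) as [Hx|[Hx|Hx]].
  - replace x with (- (- x)) by ring. rewrite sin_neg, !Rabs_Ropp.
    rewrite (Rabs_left x) by lra. apply K; lra.
  - subst; rewrite sin_0; lra.
  - rewrite (Rabs_right x) by lra. apply K; lra.
Qed.

Lemma cos_lip a b : Rabs (cos a - cos b) <= Rabs (a - b).
Proof.
  rewrite form2, !Rabs_mult. pose proof (abs_sin_le ((a - b) / 2)) as HS.
  pose proof (SIN_bound ((a + b) / 2)). assert (Rabs (sin ((a + b) / 2)) <= 1) by
    (unfold Rabs; destruct Rcase_abs; lra).
  replace (Rabs (-2)) with 2 by (rewrite Rabs_left; lra).
  replace (Rabs ((a - b) / 2)) with (Rabs (a - b) / 2) in HS by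
    (unfold Rdiv; rewrite Rabs_mult, (Rabs_right (/2)); lra).
  pose proof (Rabs_pos (sin ((a - b) / 2))). pose proof (Rabs_pos (sin ((a + b) / 2))).
  nra.
Qed.

Lemma sin_lip a b : Rabs (sin a - sin b) <= Rabs (a - b).
Proof.
  rewrite form4, !Rabs_mult. pose proof (abs_sin_le ((a - b) / 2)) as HS.
  pose proof (COS_bound ((a + b) / 2)). assert (Rabs (cos ((a + b) / 2)) <= 1) by
    (unfold Rabs; destruct Rcase_abs; lra).
  replace (Rabs 2) with 2 by (rewrite Rabs_right; lra).
  replace (Rabs ((a - b) / 2)) with (Rabs (a - b) / 2) in HS by
    (unfold Rdiv; rewrite Rabs_mult, (Rabs_right (/2)); lra).
  pose proof (Rabs_pos (sin ((a - b) / 2))). pose proof (Rabs_pos (cos ((a + b) / 2))).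
  nra.
Qed.

Lemma sq_lt_of_abs x d : Rabs x < d -> x * x < d * d.
Proof. unfold Rabs; destruct Rcase_abs; intros; nra. Qed.

Lemma ang_cont a b eps : a * a + b * b = 1 -> 0 < eps -> exists delta, 0 < delta /\
  forall a' b', a' * a' + b' * b' = 1 -> Rabs (a' - a) < delta -> Rabs (b' - b) < delta ->
  exists k, Rabs (ang a' b' - ang a b - IZR k) < eps.
Proof.
  intros Hab He. pose proof PI_RGT_0 as HPI.
  set (e' := Rmin eps (1/4)).
  assert (He' : 0 < e' <= 1/4) by (unfold e'; apply Rmin_case_strong; lra).
  assert (He'2 : e' <= eps) by (unfold e'; apply Rmin_l).
  set (c := cos (2 * PI * e')).
  assert (Hc : c < 1).
  { unfold c; rewrite <- cos_0. apply cos_decreasing_1; nra. }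
  exists (Rmin 1 ((1 - c) / 2)). split; [apply Rmin_case_strong; lra|].
  intros a' b' Hab' Ha Hb.
  assert (Hd1 : Rmin 1 ((1 - c) / 2) <= 1) by apply Rmin_l.
  assert (Hd2 : Rmin 1 ((1 - c) / 2) <= (1 - c) / 2) by apply Rmin_r.
  set (dl := Rmin 1 ((1 - c) / 2)) in *.
  assert (Hdl : 0 < dl) by (unfold dl; apply Rmin_case_strong; lra).
  apply sq_lt_of_abs in Ha. apply sq_lt_of_abs in Hb.
  set (x := ang a' b' - ang a b).
  assert (Hcx : cos (2 * PI * x) = a' * a + b' * b).
  { unfold x. replace (2 * PI * (ang a' b' - ang a b)) with (2 * PI * ang a' b' - 2 * PI * ang a b)
      by ring. rewrite cos_minus. destruct (ang_cs a b Hab) as [-> ->].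
    destruct (ang_cs a' b' Hab') as [-> ->]. ring. }
  set (k := Int_part (x + 1/2)). exists k. fold x.
  pose proof (Ip_bounds (x + 1/2)) as B. fold k in B.
  set (y := x - IZR k).
  assert (Hcy : cos (2 * PI * y) = cos (2 * PI * x)).
  { rewrite <- (cos_Z (2 * PI * y) k). f_equal. unfold y; ring. }
  destruct (Rlt_le_dec (Rabs y) e') as [Hy|Hy]; [lra|exfalso].
  assert (Hy2 : Rabs y <= 1/2) by (unfold y, Rabs; destruct Rcase_abs; lra).
  assert (Hcay : cos (2 * PI * Rabs y) <= c).
  { unfold c. destruct (Req_dec (Rabs y) e') as [E|E].
    - rewrite E; lra.
    - left. apply cos_decreasing_1; nra. }
  assert (cos (2 * PI * Rabs y) = cos (2 * PI * y)).
  { unfold Rabs; destruct Rcase_abs; auto. rewrite <- cos_neg. f_equal; ring. }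
  assert (Hval : a' * a + b' * b = 1 - ((a' - a) * (a' - a) + (b' - b) * (b' - b)) / 2) by nra.
  assert (dl * dl <= dl * ((1 - c) / 2)) by nra.
  nra.
Qed.

Lemma fold_max_ge (l : list nat) (F : nat -> R) v : In v l -> F v <= fold_right Rmax 0 (map F l).
Proof.
  induction l; simpl; [tauto|]. intros [->|Hv].
  - apply Rmax_l.
  - eapply Rle_trans; [apply IHl; auto|apply Rmax_r].
Qed.

Lemma fold_max_lt (l : list nat) (F : nat -> R) eps : 0 < eps ->
  (forall v, In v l -> F v < eps) -> fold_right Rmax 0 (map F l) < eps.
Proof.
  induction l; simpl; intros He HF; auto. apply Rmax_lub_lt; auto.
Qed.

Lemma distn_ge n f g v : (v < n)%nat -> Rabs (f v - g v) <= distn n f g.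
Proof.
  intros Hv. unfold distn. apply (fold_max_ge _ (fun v => Rabs (f v - g v))). apply in_seq; lia.
Qed.

Lemma distn_lt n f g eps : 0 < eps -> (forall v, (v < n)%nat -> Rabs (f v - g v) < eps) ->
  distn n f g < eps.
Proof.
  intros He HF. unfold distn. apply fold_max_lt; auto. intros v Hv. apply in_seq in Hv. apply HF; lia.
Qed.

Lemma dist4_lt (q q' : R4) eps :
  let '(a, b, (c, d)) := q in let '(a', b', (c', d')) := q' in
  Rabs (a - a') < eps -> Rabs (b - b') < eps -> Rabs (c - c') < eps -> Rabs (d - d') < eps ->
  dist4 q q' < eps.
Proof.
  destruct q as [[a b] [c d]], q' as [[a' b'] [c' d']]. intros. unfold dist4.
  repeat apply Rmax_lub_lt; auto.
Qed.

Lemma dist4_ge (q q' : R4) :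
  let '(a, b, (c, d)) := q in let '(a', b', (c', d')) := q' in
  Rabs (a - a') <= dist4 q q' /\ Rabs (b - b') <= dist4 q q' /\
  Rabs (c - c') <= dist4 q q' /\ Rabs (d - d') <= dist4 q q'.
Proof.
  destruct q as [[a b] [c d]], q' as [[a' b'] [c' d']]. unfold dist4.
  pose proof (Rmax_l (Rmax (Rabs (a - a')) (Rabs (b - b'))) (Rmax (Rabs (c - c')) (Rabs (d - d')))).
  pose proof (Rmax_r (Rmax (Rabs (a - a')) (Rabs (b - b'))) (Rmax (Rabs (c - c')) (Rabs (d - d')))).
  pose proof (Rmax_l (Rabs (a - a')) (Rabs (b - b'))). pose proof (Rmax_r (Rabs (a - a')) (Rabs (b - b'))).
  pose proof (Rmax_l (Rabs (c - c')) (Rabs (d - d'))). pose proof (Rmax_r (Rabs (c - c')) (Rabs (d - d'))).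
  repeat split; lra.
Qed.

Fixpoint firstnz (f : nat -> R) (l : list nat) : nat :=
  match l with
  | [] => 0%nat
  | v :: l' => if Req_dec_T (f v) 0 then firstnz f l' else v
  end.

Lemma firstnz_spec f l : (exists v, In v l /\ f v <> 0) ->
  In (firstnz f l) l /\ f (firstnz f l) <> 0.
Proof.
  induction l; simpl; intros [v [Hv Hf]]; [tauto|].
  destruct (Req_dec_T (f a) 0) as [E|E].
  - destruct Hv as [->|Hv]; [contradiction|]. destruct IHl as [H1 H2]; eauto.
  - auto.
Qed.

Definition TA p := tonnetz_realization (nn p) 3 (L3 (l1 p) (l2 p) (l3 p)).

Lemma TA_nz p f : TA p f -> exists v, In v (seq 0 (nn p)) /\ f v <> 0.
Proof.
  intros [_ [_ [Hs _]]]. destruct (classic (exists v, In v (seq 0 (nn p)) /\ f v <> 0)); auto.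
  exfalso. assert (HR0 : Rsum (seq 0 (nn p)) f = 0).
  { apply Rsum_zero. intros x Hx. destruct (Req_dec_T (f x) 0); auto. exfalso; eauto. }
  unfold sum_upto in Hs. unfold Rsum in *. lra.
Qed.

Definition base p f := firstnz f (seq 0 (nn p)).

Lemma base_spec p f : TA p f -> (base p f < nn p)%nat /\ f (base p f) <> 0.
Proof.
  intros HA. destruct (firstnz_spec f (seq 0 (nn p)) (TA_nz p f HA)) as [H1 H2].
  apply in_seq in H1. unfold base; split; auto; lia.
Qed.

Lemma cls_W0 p x : good p -> (x < nn p)%nat ->
  cls p (Z.of_nat x * c1 p, Z.of_nat x * c2 p)%Z = x.
Proof.
  intros Hg Hx. pose proof (ZN_pos p Hg). apply Nat2Z.inj. rewrite cls_spec by auto.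
  unfold phi; simpl.
  replace (Z.of_nat x * c1 p * ZL1 p + Z.of_nat x * c2 p * ZL2 p)%Z with
    (Z.of_nat x * (c1 p * ZL1 p + c2 p * ZL2 p))%Z by ring.
  rewrite Z.mul_mod, (ccond p Hg) by lia. rewrite Z.mul_1_r, Z.mod_mod by lia.
  apply Z.mod_small. unfold ZN in *; lia.
Qed.

Lemma A_tri p f : good p -> TA p f -> exists W a b,
  (a < 3)%nat /\ (b < 3)%nat /\ a <> b /\ supp_tri p f W a b.
Proof.
  intros Hg [_ [_ [_ [x [sg [Hx [[Hp1 Hp2] Hs]]]]]]].
  exists (Z.of_nat x * c1 p, Z.of_nat x * c2 p)%Z, (sg 0%nat), (sg 1%nat).
  assert (A0 := Hp1 0%nat ltac:(lia)). assert (A1 := Hp1 1%nat ltac:(lia)).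
  assert (Hab : sg 0%nat <> sg 1%nat) by (intro E; apply Hp2 in E; lia).
  repeat split; auto.
  intros w Hw Hf. destruct (Hs w Hf) as [j [Hj ->]]. exists j. split; auto.
  rewrite cls_vert by auto. rewrite cls_W0 by auto. f_equal. f_equal.
  destruct j as [|[|[|j]]]; try lia; reflexivity.
Qed.

Lemma A_fbary p f : good p -> TA p f -> exists W a b t1 t2,
  (a < 3)%nat /\ (b < 3)%nat /\ a <> b /\ 0 <= t1 /\ 0 <= t2 /\ t1 + t2 <= 1 /\
  f = fbary p W a b t1 t2.
Proof.
  intros Hg HA. destruct (A_tri p f Hg HA) as [W [a [b [Ha [Hb [Hab Hs]]]]]].
  destruct HA as [Hnn [Hz [Hsum _]]].
  pose proof (sum3 p f W a b (fun _ => 1) Hg Ha Hb Hab Hs) as S.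
  rewrite (Rsum_ext_in _ _ f) in S by (intros; ring). unfold sum_upto in Hsum.
  unfold Rsum in S. rewrite Hsum in S.
  exists W, a, b, (f (cls p (vert W a b 1))), (f (cls p (vert W a b 2))).
  pose proof (Hnn (cls p (vert W a b 0))). pose proof (Hnn (cls p (vert W a b 1))).
  pose proof (Hnn (cls p (vert W a b 2))).
  repeat split; auto; try lra.
  extensionality v. destruct (Nat.lt_ge_cases v (nn p)) as [Hv|Hv].
  2: { rewrite Hz by auto. unfold fbary. replace (Nat.ltb v (nn p)) with false; auto.
       symmetry; apply Nat.ltb_ge; auto. }
  assert (Hn : forall i j, (i < 3)%nat -> (j < 3)%nat -> i <> j ->
     Nat.eqb (cls p (vert W a b i)) (cls p (vert W a b j)) = false).
  { intros i j Hi Hj Hij. apply Nat.eqb_neq. intro E. apply Hij.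
    apply (tri_cls_inj p W a b i j); auto. }
  destruct (Req_dec_T (f v) 0) as [E|E].
  - rewrite E. unfold fbary. replace (Nat.ltb v (nn p)) with true by (symmetry; apply Nat.ltb_lt; auto).
    destruct (Nat.eqb_spec (cls p (vert W a b 0)) v) as [<-|];
    [rewrite ?Hn by lia; lra|].
    destruct (Nat.eqb_spec (cls p (vert W a b 1)) v) as [<-|];
    [rewrite ?Hn by lia; lra|].
    destruct (Nat.eqb_spec (cls p (vert W a b 2)) v) as [<-|];
    [rewrite ?Hn by lia; lra|]. lra.
  - destruct (Hs v Hv E) as [j [Hj ->]].
    destruct (fbary_vals p W a b (f (cls p (vert W a b 1))) (f (cls p (vert W a b 2))) Hg Ha Hb Hab)
      as [V0 [V1 V2]].
    destruct j as [|[|[|j]]]; try lia; [rewrite V0| rewrite V1| rewrite V2]; lra.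
Qed.

Lemma dd_bound p r : Rabs (IZR (fst (dd p r))) <= 1 /\ Rabs (IZR (snd (dd p r))) <= 1.
Proof.
  unfold dd; repeat destruct (Z.eqb _ _); simpl; split; unfold Rabs; destruct Rcase_abs; lra.
Qed.

Lemma lemK_fbary p W a b t1 t2 u : good p -> (a < 3)%nat -> (b < 3)%nat -> a <> b ->
  0 <= t1 -> 0 <= t2 -> t1 + t2 <= 1 ->
  (u < nn p)%nat -> fbary p W a b t1 t2 u <> 0 ->
  exists k1 k2, (phi p (k1, k2) mod ZN p = 0)%Z /\
    Zsum p (fbary p W a b t1 t2) u =
    (fst (zbary W a b t1 t2) + IZR k1, snd (zbary W a b t1 t2) + IZR k2).
Proof.
  intros Hg Ha Hb Hab Ht1 Ht2 Ht Hu Hf.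
  destruct (fbary_supp p W a b t1 t2 u Hu Hf) as [i [Hi Hui]].
  destruct (lemK p (fbary p W a b t1 t2) W a b i u Hg Ha Hb Hab (fbary_supp p W a b t1 t2)
    (fbary_sum p W a b t1 t2 Hg Ha Hb Hab) Hi Hui) as [k1 [k2 [Hk [E1 E2]]]].
  exists k1, k2. split; auto.
  destruct (fbary_vals p W a b t1 t2 Hg Ha Hb Hab) as [V0 [V1 V2]].
  rewrite V0, V1, V2 in E1, E2.
  destruct (Zsum p (fbary p W a b t1 t2) u) as [z1 z2]. simpl in E1, E2.
  unfold zbary; simpl. rewrite E1, E2. reflexivity.
Qed.

Definition hmap p (f : nat -> R) : R4 := Psi (xi p (Zsum p f (base p f))).
Definition gmap p (q : R4) : nat -> R := G p (Mm p (ang2 q)).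

Lemma Psi_xi_shift p z k1 k2 : good p -> (phi p (k1, k2) mod ZN p = 0)%Z ->
  Psi (xi p (fst z + IZR k1, snd z + IZR k2)) = Psi (xi p z).
Proof.
  intros Hg Hk. destruct (lattice_xi p k1 k2 Hg Hk) as [m1 [m2 E]].
  rewrite E. apply Psi_shift.
Qed.

Lemma Mm_add p s s' : Mm p (fst s + fst s', snd s + snd s') =
  (fst (Mm p s) + fst (Mm p s'), snd (Mm p s) + snd (Mm p s')).
Proof. unfold Mm; simpl. f_equal; ring. Qed.

Lemma hmap_fbary p W a b t1 t2 : good p -> (a < 3)%nat -> (b < 3)%nat -> a <> b ->
  0 <= t1 -> 0 <= t2 -> t1 + t2 <= 1 ->
  hmap p (fbary p W a b t1 t2) = Psi (xi p (zbary W a b t1 t2)).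
Proof.
  intros Hg Ha Hb Hab Ht1 Ht2 Ht.
  destruct (base_spec p (fbary p W a b t1 t2) (fbary_A p W a b t1 t2 Hg Ha Hb Hab Ht1 Ht2 Ht))
    as [Hu Hf].
  destruct (lemK_fbary p W a b t1 t2 _ Hg Ha Hb Hab Ht1 Ht2 Ht Hu Hf) as [k1 [k2 [Hk E]]].
  unfold hmap. rewrite E. apply Psi_xi_shift; auto.
Qed.

Lemma gmap_Psi p s : good p -> exists m1 m2, (phi p (m1, m2) mod ZN p = 0)%Z /\
  Mm p (ang2 (Psi s)) = (fst (Mm p s) + IZR m1, snd (Mm p s) + IZR m2).
Proof.
  intros Hg. destruct (ang_of (fst s)) as [j1 E1]. destruct (ang_of (snd s)) as [j2 E2].
  destruct (M_int p (- j1) (- j2) Hg) as [m1 [m2 [Hm EM]]].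
  exists m1, m2. split; auto. unfold Psi, ang2. rewrite E1, E2.
  replace (fst s - IZR j1, snd s - IZR j2) with (fst s + fst (IZR (- j1), IZR (- j2)),
     snd s + snd (IZR (- j1), IZR (- j2))) by (simpl; rewrite !opp_IZR; f_equal; ring).
  rewrite Mm_add, EM. reflexivity.
Qed.

Lemma T3 p f : good p -> TA p f -> gmap p (hmap p f) = f.
Proof.
  intros Hg HA. destruct (A_fbary p f Hg HA) as [W [a [b [t1 [t2 [Ha [Hb [Hab [H1 [H2 [H3 ->]]]]]]]]]]].
  rewrite hmap_fbary by auto. unfold gmap.
  destruct (gmap_Psi p (xi p (zbary W a b t1 t2)) Hg) as [m1 [m2 [Hm E]]].
  rewrite E, M_xi by auto. extensionality v.
  rewrite G_period by auto. apply G_bary; auto.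
Qed.

Lemma T4 p q : good p -> torus2 q -> hmap p (gmap p q) = q.
Proof.
  intros Hg Hq. unfold gmap.
  destruct (G_cell p (Mm p (ang2 q)) Hg) as [W [a [b [t1 [t2 [Ha [Hb [Hab [H1 [H2 [H3 [Hz HG]]]]]]]]]]]].
  assert (E : G p (Mm p (ang2 q)) = fbary p W a b t1 t2) by (extensionality v; auto).
  rewrite E, hmap_fbary by auto. rewrite <- Hz, xi_M by auto. apply Psi_ang; auto.
Qed.

Lemma Rsum_minus {A} (l : list A) F G : Rsum l F - Rsum l G = Rsum l (fun x => F x - G x).
Proof.
  induction l; rewrite ?Rsum_nil, ?Rsum_cons; [ring|]. rewrite <- IHl. ring.
Qed.

Lemma G_lip p z z' v : (v < nn p)%nat ->
  Rabs (G p z v - G p z' v) <= 16 * (Rabs (fst z - fst z') + Rabs (snd z - snd z')).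
Proof.
  intros Hv. set (B := nodup pdec (cell z ++ cell z')).
  assert (HB : NoDup B) by apply NoDup_nodup.
  rewrite (G_any p z v B), (G_any p z' v B); auto;
    try (intros x Hx; apply nodup_In, in_app_iff; auto).
  rewrite Rsum_minus. eapply Rle_trans; [apply Rsum_abs|].
  eapply Rle_trans; [apply (Rsum_const_bound _ _ (2 * (Rabs (fst z - fst z') + Rabs (snd z - snd z'))))|].
  - intros W _. unfold hterm. destruct (Nat.eqb _ _).
    + eapply Rle_trans; [apply H_lip|]. right; f_equal. f_equal; f_equal; ring.
    + rewrite Rminus_0_r, Rabs_R0. pose proof (Rabs_pos (fst z - fst z')).
      pose proof (Rabs_pos (snd z - snd z')). lra.
  - assert (HL : (length B <= 8)%nat).
    { apply (NoDup_incl_length (l' := cell z ++ cell z')) in HB.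
      - rewrite length_app in HB. unfold cell in HB; simpl in HB. lia.
      - intros x Hx. apply nodup_In in Hx. auto. }
    apply le_INR in HL. replace (INR 8) with 8 in HL by (simpl; ring).
    pose proof (Rabs_pos (fst z - fst z')). pose proof (Rabs_pos (snd z - snd z')).
    pose proof (pos_INR (length B)). nra.
Qed.

Definition KM p := Rabs (IZR (ZN p / gg p)) + Rabs (IZR (uu p * ZL2 p)) + Rabs (IZR (gg p)).

Lemma KM_nonneg p : 0 <= KM p.
Proof. unfold KM. pose proof (Rabs_pos (IZR (ZN p / gg p))). pose proof (Rabs_pos (IZR (uu p * ZL2 p))).
  pose proof (Rabs_pos (IZR (gg p))). lra. Qed.

Lemma lin_bound (A B x y : R) : Rabs (x * A - y * B) <= (Rabs A + Rabs B) * (Rabs x + Rabs y).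
Proof.
  eapply Rle_trans; [apply Rabs_triang|]. rewrite Rabs_Ropp, !Rabs_mult.
  pose proof (Rabs_pos A). pose proof (Rabs_pos B). pose proof (Rabs_pos x). pose proof (Rabs_pos y).
  nra.
Qed.

Lemma M_lip p s s' :
  Rabs (fst (Mm p s) - fst (Mm p s')) <= KM p * (Rabs (fst s - fst s') + Rabs (snd s - snd s')) /\
  Rabs (snd (Mm p s) - snd (Mm p s')) <= KM p * (Rabs (fst s - fst s') + Rabs (snd s - snd s')).
Proof.
  unfold Mm; simpl. split.
  - replace (fst s * IZR (ZN p / gg p) - snd s * IZR (uu p * ZL2 p) -
      (fst s' * IZR (ZN p / gg p) - snd s' * IZR (uu p * ZL2 p))) with
      ((fst s - fst s') * IZR (ZN p / gg p) - (snd s - snd s') * IZR (uu p * ZL2 p)) by ring.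
    eapply Rle_trans; [apply lin_bound|]. unfold KM.
    pose proof (Rabs_pos (IZR (gg p))). pose proof (Rabs_pos (fst s - fst s')).
    pose proof (Rabs_pos (snd s - snd s')). nra.
  - replace (snd s * IZR (gg p) - snd s' * IZR (gg p)) with ((snd s - snd s') * IZR (gg p)) by ring.
    rewrite Rabs_mult. unfold KM.
    pose proof (Rabs_pos (IZR (ZN p / gg p))). pose proof (Rabs_pos (IZR (uu p * ZL2 p))).
    pose proof (Rabs_pos (IZR (gg p))). pose proof (Rabs_pos (fst s - fst s')).
    pose proof (Rabs_pos (snd s - snd s')). nra.
Qed.

Lemma gmap_cont p : good p -> cont_on dist4 (distn (nn p)) torus2 (gmap p).
Proof.
  intros Hg q Hq eps He. destruct q as [[a b] [c d]]. destruct Hq as [Hab Hcd].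
  pose proof (KM_nonneg p) as HK.
  set (eta := eps / (64 * KM p + 1)).
  assert (Heta : 0 < eta) by (unfold eta; apply Rdiv_lt_0_compat; lra).
  destruct (ang_cont a b eta Hab Heta) as [d1 [Hd1 C1']].
  destruct (ang_cont c d eta Hcd Heta) as [d2 [Hd2 C2']].
  exists (Rmin d1 d2). split; [apply Rmin_case_strong; lra|].
  intros q' Hq' Hdist. destruct q' as [[a' b'] [c' d']]. destruct Hq' as [Hab' Hcd'].
  pose proof (dist4_ge (a, b, (c, d)) (a', b', (c', d'))) as [G1 [G2 [G3 G4]]].
  pose proof (Rmin_l d1 d2). pose proof (Rmin_r d1 d2).
  rewrite Rabs_minus_sym in G1, G2, G3, G4.
  destruct (C1' a' b' Hab' ltac:(lra) ltac:(lra)) as [k1 K1].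
  destruct (C2' c' d' Hcd' ltac:(lra) ltac:(lra)) as [k2 K2].
  set (r1 := ang a' b' - ang a b - IZR k1) in *.
  set (r2 := ang c' d' - ang c d - IZR k2) in *.
  set (s := (ang a b, ang c d)).
  assert (Eq : ang2 (a', b', (c', d')) = (fst (fst s + r1, snd s + r2) + fst (IZR k1, IZR k2),
                                          snd (fst s + r1, snd s + r2) + snd (IZR k1, IZR k2)))
    by (unfold ang2, s, r1, r2; simpl; f_equal; ring).
  destruct (M_int p k1 k2 Hg) as [m1 [m2 [Hm EM]]].
  unfold gmap. rewrite Eq, Mm_add, EM. cbn [fst snd].
  apply distn_lt; auto. intros v Hv.
  rewrite (G_period p (Mm p (fst s + r1, snd s + r2)) m1 m2 Hg Hm v).
  rewrite Rabs_minus_sym. eapply Rle_lt_trans; [apply G_lip; auto|].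
  destruct (M_lip p (fst s + r1, snd s + r2) s) as [M1 M2].
  cbn [fst snd] in M1, M2.
  replace (fst s + r1 - fst s) with r1 in M1, M2 by ring.
  replace (snd s + r2 - snd s) with r2 in M1, M2 by ring.
  assert (Hr : Rabs r1 + Rabs r2 < 2 * eta) by lra.
  assert (E64 : 64 * KM p * eta < eps).
  { assert (Ee : eta * (64 * KM p + 1) = eps) by (unfold eta; field; lra). nra. }
  pose proof (Rabs_pos r1). pose proof (Rabs_pos r2).
  assert (KM p * (Rabs r1 + Rabs r2) <= KM p * (2 * eta)) by (apply Rmult_le_compat_l; lra).
  change (ang2 (a, b, (c, d))) with s.
  assert (KM p * (2 * eta) = 2 * (KM p * eta)) by ring.
  assert (64 * KM p * eta = 64 * (KM p * eta)) by ring.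
  lra.
Qed.

Lemma Rdiv_le_0_compat a b : 0 <= a -> 0 < b -> 0 <= a / b.
Proof. intros. unfold Rdiv. apply Rmult_le_pos; [auto|left; apply Rinv_0_lt_compat; auto]. Qed.

Lemma hmap_any p f u : good p -> TA p f -> (u < nn p)%nat -> f u <> 0 ->
  hmap p f = Psi (xi p (Zsum p f u)).
Proof.
  intros Hg HA Hu Hf.
  destruct (A_fbary p f Hg HA) as [W [a [b [t1 [t2 [Ha [Hb [Hab [H1 [H2 [H3 ->]]]]]]]]]]].
  rewrite hmap_fbary by auto.
  destruct (lemK_fbary p W a b t1 t2 u Hg Ha Hb Hab H1 H2 H3 Hu Hf) as [k1 [k2 [Hk E]]].
  rewrite E, Psi_xi_shift; auto.
Qed.

Lemma Zsum_lip p f f' u :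
  Rabs (fst (Zsum p f u) - fst (Zsum p f' u)) <= INR (nn p) * distn (nn p) f f' /\
  Rabs (snd (Zsum p f u) - snd (Zsum p f' u)) <= INR (nn p) * distn (nn p) f f'.
Proof.
  unfold Zsum; simpl. split.
  - replace (IZR (Z.of_nat u * c1 p) + Rsum (seq 0 (nn p)) (fun w => f w * IZR (fst (delta p u w))) -
       (IZR (Z.of_nat u * c1 p) + Rsum (seq 0 (nn p)) (fun w => f' w * IZR (fst (delta p u w)))))
     with (Rsum (seq 0 (nn p)) (fun w => f w * IZR (fst (delta p u w))) -
           Rsum (seq 0 (nn p)) (fun w => f' w * IZR (fst (delta p u w)))) by ring.
    rewrite Rsum_minus. eapply Rle_trans; [apply Rsum_abs|].
    rewrite <- (length_seq (nn p) 0) at 2. apply Rsum_const_bound.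
    intros w Hw. apply in_seq in Hw.
    replace (f w * IZR (fst (delta p u w)) - f' w * IZR (fst (delta p u w))) with
      ((f w - f' w) * IZR (fst (delta p u w))) by ring.
    rewrite Rabs_mult. pose proof (distn_ge (nn p) f f' w ltac:(lia)).
    destruct (dd_bound p ((Z.of_nat w - Z.of_nat u) mod ZN p)) as [B _].
    unfold delta. pose proof (Rabs_pos (f w - f' w)).
    pose proof (Rabs_pos (IZR (fst (dd p ((Z.of_nat w - Z.of_nat u) mod ZN p))))). nra.
  - replace (IZR (Z.of_nat u * c2 p) + Rsum (seq 0 (nn p)) (fun w => f w * IZR (snd (delta p u w))) -
       (IZR (Z.of_nat u * c2 p) + Rsum (seq 0 (nn p)) (fun w => f' w * IZR (snd (delta p u w)))))
     with (Rsum (seq 0 (nn p)) (fun w => f w * IZR (snd (delta p u w))) -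
           Rsum (seq 0 (nn p)) (fun w => f' w * IZR (snd (delta p u w)))) by ring.
    rewrite Rsum_minus. eapply Rle_trans; [apply Rsum_abs|].
    rewrite <- (length_seq (nn p) 0) at 2. apply Rsum_const_bound.
    intros w Hw. apply in_seq in Hw.
    replace (f w * IZR (snd (delta p u w)) - f' w * IZR (snd (delta p u w))) with
      ((f w - f' w) * IZR (snd (delta p u w))) by ring.
    rewrite Rabs_mult. pose proof (distn_ge (nn p) f f' w ltac:(lia)).
    destruct (dd_bound p ((Z.of_nat w - Z.of_nat u) mod ZN p)) as [_ B].
    unfold delta. pose proof (Rabs_pos (f w - f' w)).
    pose proof (Rabs_pos (IZR (snd (dd p ((Z.of_nat w - Z.of_nat u) mod ZN p))))). nra.
Qed.

Definition Kx p := (Rabs (IZR (gg p)) + Rabs (IZR (uu p * ZL2 p))) / IZR (ZN p) + 1 / IZR (gg p).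

Lemma xi_lip p z z' : good p ->
  Rabs (fst (xi p z) - fst (xi p z')) <= Kx p * (Rabs (fst z - fst z') + Rabs (snd z - snd z')) /\
  Rabs (snd (xi p z) - snd (xi p z')) <= Kx p * (Rabs (fst z - fst z') + Rabs (snd z - snd z')).
Proof.
  intros Hg. pose proof (gpos p Hg). pose proof (ZN_pos p Hg).
  assert (Gp : 0 < IZR (gg p)) by (apply IZR_lt; lia).
  assert (Np : 0 < IZR (ZN p)) by (apply IZR_lt; lia).
  set (A := IZR (gg p)) in *. set (B := IZR (uu p * ZL2 p)). set (N := IZR (ZN p)) in *.
  set (x := fst z - fst z'). set (y := snd z - snd z').
  pose proof (Rabs_pos x). pose proof (Rabs_pos y). pose proof (Rabs_pos A). pose proof (Rabs_pos B).
  assert (K1 : 0 <= (Rabs A + Rabs B) / N) by (apply Rdiv_le_0_compat; lra).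
  assert (K2 : 0 < 1 / A) by (apply Rdiv_lt_0_compat; lra).
  unfold xi, Kx; simpl. fold A B N. split.
  - replace ((A * fst z + B * snd z) / N - (A * fst z' + B * snd z') / N) with
      ((A * x + B * y) / N) by (unfold x, y; field; lra).
    unfold Rdiv. rewrite Rabs_mult, (Rabs_right (/ N)) by (apply Rle_ge; left; apply Rinv_0_lt_compat; lra).
    assert (Rabs (A * x + B * y) <= (Rabs A + Rabs B) * (Rabs x + Rabs y)).
    { eapply Rle_trans; [apply Rabs_triang|]. rewrite !Rabs_mult. nra. }
    assert (0 < / N) by (apply Rinv_0_lt_compat; lra).
    assert (Rabs (A * x + B * y) * / N <= (Rabs A + Rabs B) * (Rabs x + Rabs y) * / N) by
      (apply Rmult_le_compat_r; lra).
    assert (1 * / A * (Rabs x + Rabs y) >= 0) by (apply Rle_ge; apply Rmult_le_pos; lra).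
    nra.
  - replace (snd z / A - snd z' / A) with (y / A) by (unfold y; field; lra).
    unfold Rdiv. rewrite Rabs_mult, (Rabs_right (/ A)) by (apply Rle_ge; left; apply Rinv_0_lt_compat; lra).
    assert (0 < / A) by (apply Rinv_0_lt_compat; lra).
    assert (0 <= (Rabs A + Rabs B) * / N * (Rabs x + Rabs y)).
    { apply Rmult_le_pos; [|lra]. apply Rmult_le_pos; [lra|]. left; apply Rinv_0_lt_compat; lra. }
    nra.
Qed.

Lemma Kx_pos p : good p -> 0 < Kx p.
Proof.
  intros Hg. pose proof (gpos p Hg). pose proof (ZN_pos p Hg).
  assert (Gp : 0 < IZR (gg p)) by (apply IZR_lt; lia).
  assert (Np : 0 < IZR (ZN p)) by (apply IZR_lt; lia).
  unfold Kx. pose proof (Rabs_pos (IZR (gg p))). pose proof (Rabs_pos (IZR (uu p * ZL2 p))).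
  assert (0 <= (Rabs (IZR (gg p)) + Rabs (IZR (uu p * ZL2 p))) / IZR (ZN p)) by (apply Rdiv_le_0_compat; lra).
  assert (0 < 1 / IZR (gg p)) by (apply Rdiv_lt_0_compat; lra). lra.
Qed.

Lemma trig_lip2 s s' : Rabs (cos (2 * PI * s) - cos (2 * PI * s')) <= 2 * PI * Rabs (s - s') /\
  Rabs (sin (2 * PI * s) - sin (2 * PI * s')) <= 2 * PI * Rabs (s - s').
Proof.
  pose proof PI_RGT_0.
  replace (2 * PI * Rabs (s - s')) with (Rabs (2 * PI * s - 2 * PI * s')).
  - split; [apply cos_lip|apply sin_lip].
  - replace (2 * PI * s - 2 * PI * s') with ((2 * PI) * (s - s')) by ring.
    rewrite Rabs_mult, (Rabs_right (2 * PI)); lra.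
Qed.

Lemma hmap_cont p : good p -> cont_on (distn (nn p)) dist4 (TA p) (hmap p).
Proof.
  intros Hg f HA eps He.
  destruct (base_spec p f HA) as [Hu Hfu]. set (u := base p f) in *.
  assert (Hfu' : 0 < f u) by (destruct HA as [Hnn _]; pose proof (Hnn u); lra).
  pose proof (Kx_pos p Hg) as HK. pose proof PI_RGT_0.
  pose proof (pos_INR (nn p)).
  set (C := 2 * PI * Kx p * 2 * INR (nn p) + 1).
  assert (HC : 1 <= C).
  { unfold C. assert (0 <= 2 * PI * Kx p * 2 * INR (nn p)).
    { assert (0 <= PI * Kx p) by nra. assert (0 <= PI * Kx p * INR (nn p)) by nra. nra. } lra. }
  exists (Rmin (f u) (eps / C)). split.
  { apply Rmin_case_strong; intros; auto. apply Rdiv_lt_0_compat; lra. }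
  intros f' HA' Hd.
  pose proof (Rmin_l (f u) (eps / C)). pose proof (Rmin_r (f u) (eps / C)).
  set (D := distn (nn p) f f') in *.
  pose proof (distn_ge (nn p) f f' u Hu) as Hdu. fold D in Hdu.
  assert (Hf'u : f' u <> 0) by (unfold Rabs in Hdu; destruct Rcase_abs; lra).
  assert (HD0 : 0 <= D) by (pose proof (Rabs_pos (f u - f' u)); lra).
  unfold hmap at 1. fold u. rewrite (hmap_any p f' u Hg HA' Hu Hf'u).
  destruct (Zsum_lip p f f' u) as [Z1 Z2]. fold D in Z1, Z2.
  destruct (xi_lip p (Zsum p f u) (Zsum p f' u) Hg) as [X1 X2].
  set (s := xi p (Zsum p f u)) in *. set (s' := xi p (Zsum p f' u)) in *.
  assert (Hs : forall w, Rabs w <= Kx p * (Rabs (fst (Zsum p f u) - fst (Zsum p f' u)) +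
      Rabs (snd (Zsum p f u) - snd (Zsum p f' u))) -> 2 * PI * Rabs w < eps).
  { intros w Hw.
    assert (Kx p * (Rabs (fst (Zsum p f u) - fst (Zsum p f' u)) +
      Rabs (snd (Zsum p f u) - snd (Zsum p f' u))) <= Kx p * (2 * INR (nn p) * D)).
    { apply Rmult_le_compat_l; lra. }
    assert (C * D < eps).
    { assert (HDe : D < eps / C) by lra.
      apply (Rmult_lt_compat_l C) in HDe; [|lra]. unfold Rdiv in HDe.
      rewrite <- Rmult_assoc, (Rmult_comm C eps), Rmult_assoc, Rinv_r in HDe by lra. lra. }
    assert (2 * PI * Rabs w <= 2 * PI * (Kx p * (2 * INR (nn p) * D))) by
      (apply Rmult_le_compat_l; lra).
    assert (2 * PI * (Kx p * (2 * INR (nn p) * D)) = (C - 1) * D) by (unfold C; ring).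
    nra. }
  destruct (trig_lip2 (fst s) (fst s')) as [T1 T2].
  destruct (trig_lip2 (snd s) (snd s')) as [T3 T4].
  pose proof (dist4_lt (Psi s) (Psi s') eps) as HD. unfold Psi in HD |- *. cbv beta iota in HD.
  apply HD.
  - eapply Rle_lt_trans; [apply T1|]. apply Hs; auto.
  - eapply Rle_lt_trans; [apply T2|]. apply Hs; auto.
  - eapply Rle_lt_trans; [apply T3|]. apply Hs; auto.
  - eapply Rle_lt_trans; [apply T4|]. apply Hs; auto.
Qed.

Lemma Zdiv_nat (d : Z) (a : nat) : (0 <= d)%Z -> (d | Z.of_nat a)%Z -> Nat.divide (Z.to_nat d) a.
Proof.
  intros Hd [k Hk]. destruct (Z.eq_dec d 0) as [->|Hn].
  - assert (a = 0%nat) by lia. subst. exists 0%nat. reflexivity.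
  - assert (Hk0 : (0 <= k)%Z) by nia. exists (Z.to_nat k).
    rewrite <- Z2Nat.inj_mul by lia. rewrite <- Hk. lia.
Qed.

Lemma common3 l1' l2' l3' (d : Z) :
  reduced 3 (L3 l1' l2' l3') -> (0 <= d)%Z ->
  (d | Z.of_nat l1')%Z -> (d | Z.of_nat l2')%Z -> (d | Z.of_nat (l1' + l2' + l3'))%Z -> d = 1%Z.
Proof.
  intros Hr Hd H1 H2 HN.
  assert (H3 : (d | Z.of_nat l3')%Z).
  { replace (Z.of_nat l3') with (Z.of_nat (l1' + l2' + l3') - Z.of_nat l1' - Z.of_nat l2')%Z by lia.
    apply Z.divide_sub_r; [apply Z.divide_sub_r|]; auto. }
  apply Zdiv_nat in H1, H2, H3; auto.
  unfold reduced in Hr. simpl in Hr.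
  assert (HD1 : Nat.divide (Z.to_nat d) 1).
  { rewrite <- Hr. apply Nat.gcd_greatest; auto. apply Nat.gcd_greatest; auto.
    rewrite Nat.gcd_0_r. auto. }
  apply Nat.divide_1_r in HD1. lia.
Qed.

Lemma gen_ne l1' l2' l3' (I J : nat -> bool) : generic 3 (L3 l1' l2' l3') ->
  (I 0%nat <> J 0%nat \/ I 1%nat <> J 1%nat) ->
  subset_sum 3 (L3 l1' l2' l3') I <> subset_sum 3 (L3 l1' l2' l3') J.
Proof. intros Hg [Hn|Hn] E; apply Hn; apply (Hg I J E); lia. Qed.

Theorem proposition2p4 (n l1 l2 l3 : nat) :
  (0 < l1)%nat -> (0 < l2)%nat -> (0 < l3)%nat ->
  (l1 + l2 + l3)%nat = n ->
  generic 3 (L3 l1 l2 l3) ->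
  reduced 3 (L3 l1 l2 l3) ->
  triangulates_torus2 n (tonnetz_realization n 3 (L3 l1 l2 l3)).
Proof.
  intros P1 P2 P3 Hn Hgen Hred. subst n.
  set (ZL1' := Z.of_nat l1). set (ZL2' := Z.of_nat l2). set (ZN' := Z.of_nat (l1 + l2 + l3)).
  assert (D12 : l1 <> l2).
  { intro E. apply (gen_ne l1 l2 l3 (fun i => Nat.eqb i 0) (fun i => Nat.eqb i 1) Hgen);
    try (simpl; (left; congruence) || (right; congruence)); unfold subset_sum; simpl; lia. }
  assert (D13 : l1 <> l3).
  { intro E. apply (gen_ne l1 l2 l3 (fun i => Nat.eqb i 0) (fun i => Nat.eqb i 2) Hgen);
    try (simpl; (left; congruence) || (right; congruence)); unfold subset_sum; simpl; lia. }
  assert (D23 : l2 <> l3).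
  { intro E. apply (gen_ne l1 l2 l3 (fun i => Nat.eqb i 2) (fun i => Nat.eqb i 1) Hgen);
    try (simpl; (left; congruence) || (right; congruence)); unfold subset_sum; simpl; lia. }
  assert (S1 : l1 <> (l2 + l3)%nat).
  { intro E. apply (gen_ne l1 l2 l3 (fun i => Nat.eqb i 0) (fun i => negb (Nat.eqb i 0)) Hgen);
    try (simpl; (left; congruence) || (right; congruence)); unfold subset_sum; simpl; lia. }
  assert (S2 : l2 <> (l1 + l3)%nat).
  { intro E. apply (gen_ne l1 l2 l3 (fun i => negb (Nat.eqb i 1)) (fun i => Nat.eqb i 1) Hgen);
    try (simpl; (left; congruence) || (right; congruence)); unfold subset_sum; simpl; lia. }
  assert (S3 : l3 <> (l1 + l2)%nat).
  { intro E. apply (gen_ne l1 l2 l3 (fun i => negb (Nat.eqb i 2)) (fun i => Nat.eqb i 2) Hgen);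
    try (simpl; (left; congruence) || (right; congruence)); unfold subset_sum; simpl; lia. }
  set (g := Z.gcd ZL1' ZN').
  assert (Hgpos : (0 < g)%Z).
  { pose proof (Z.gcd_nonneg ZL1' ZN'). destruct (Z.eq_dec g 0) as [E|E]; [|unfold g in *; lia].
    apply Z.gcd_eq_0_l in E. unfold ZL1' in E. lia. }
  destruct (Z.gcd_bezout ZL1' ZN' g eq_refl) as [u [w Huw]].
  set (g2 := Z.gcd ZL2' ZN').
  destruct (Z.gcd_bezout ZL2' ZN' g2 eq_refl) as [a0 [b0 Hab0]].
  assert (Hg12 : Z.gcd ZL1' g2 = 1%Z).
  { apply (common3 l1 l2 l3); auto. apply Z.gcd_nonneg.
    - apply Z.gcd_divide_l.
    - eapply Z.divide_trans; [apply Z.gcd_divide_r|apply Z.gcd_divide_l].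
    - eapply Z.divide_trans; [apply Z.gcd_divide_r|apply Z.gcd_divide_r]. }
  destruct (Z.gcd_bezout ZL1' g2 1 Hg12) as [x [y Hxy]].
  set (p := {| l1 := l1; l2 := l2; l3 := l3; gg := g; uu := u; c1 := x; c2 := (y * a0)%Z |}).
  assert (Hg : good p).
  { constructor; simpl; auto.
    - apply Z.gcd_divide_l.
    - apply Z.gcd_divide_r.
    - exists w. exact Huw.
    - apply (common3 l1 l2 l3); auto. apply Z.gcd_nonneg.
      + eapply Z.divide_trans; [apply Z.gcd_divide_l|apply Z.gcd_divide_l].
      + apply Z.gcd_divide_r.
      + eapply Z.divide_trans; [apply Z.gcd_divide_l|apply Z.gcd_divide_r].
    - apply Z.gcd_div_gcd; [lia|reflexivity].
    - unfold ZL1, ZL2, ZN, nn; simpl. fold ZL1' ZL2' ZN'.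
      replace (x * ZL1' + y * a0 * ZL2')%Z with (1 + (- (y * b0)) * ZN')%Z.
      + rewrite Z_mod_plus_full. apply Z.mod_small. unfold ZN'; lia.
      + rewrite <- Hxy, <- Hab0. ring. }
  change (triangulates_torus2 (nn p) (TA p)).
  exists (hmap p), (gmap p). split; [|split; [|split; [|split; [|split]]]].
  - intros f _. apply Psi_torus.
  - intros q _. apply G_A; auto.
  - intros f Hf. apply T3; auto.
  - intros q Hq. apply T4; auto.
  - apply hmap_cont; auto.
  - apply gmap_cont; auto.
Qed.
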